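(* Let $\varepsilon>0$ and let $f$ be holomorphic on $(1+\varepsilon)\mathbb{D}=\{z\in\mathbb{C}:|z|<1+\varepsilon\}$ such that $f(\overline{\mathbb{D}})=\overline{\mathbb{D}}$ and $f((1+\varepsilon)\mathbb{D})\subset(1+\varepsilon)\mathbb{D}$. Then $f$ is a rotation, i.e. there is $\beta\in\mathbb{C}$ with $|\beta|=1$ such that $f(z)=\beta z$ for all $z$.
   Context: $\mathbb{D}$ is the open unit disc and $\overline{\mathbb{D}}$ its closure. *)

(* Defs.v *)
From Stdlib Require Import Reals.
From Coquelicot Require Export Coquelicot.
Open Scope R_scope.

Definition C_holomorphic_at (f : C -> C) (z : C) : Prop :=
  @ex_derive C_AbsRing C_NormedModule f z.

Definition holomorphic_on_disc (r : R) (f : C -> C) : Prop :=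
  forall z : C, Cmod z < r -> C_holomorphic_at f z.

(* Main.v *)
Require Import Defs.
From Stdlib Require Import Reals.
From Coquelicot Require Import Coquelicot.
Open Scope R_scope.
From Stdlib Require Import Lra Psatz.

Lemma Cmod_fst_le (x : C) : Rabs (fst x) <= Cmod x.
Proof. generalize (Rmax_Cmod x). generalize (Rmax_l (Rabs (fst x)) (Rabs (snd x))). lra. Qed.
Lemma Cmod_snd_le (x : C) : Rabs (snd x) <= Cmod x.
Proof. generalize (Rmax_Cmod x). generalize (Rmax_r (Rabs (fst x)) (Rabs (snd x))). lra. Qed.
Lemma Cmod_le_sum (x : C) : Cmod x <= Rabs (fst x) + Rabs (snd x).
Proof.
  destruct x as [a b]; unfold Cmod; simpl.
  generalize (Rabs_pos a) (Rabs_pos b); intros.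
  rewrite <- (sqrt_pow2 (Rabs a + Rabs b)) by lra.
  apply sqrt_le_1_alt. simpl. replace (a*(a*1)) with (Rabs a * Rabs a) by (rewrite <- Rabs_mult; rewrite Rmult_1_r; apply Rabs_pos_eq; nra). replace (b*(b*1)) with (Rabs b * Rabs b) by (rewrite <- Rabs_mult; rewrite Rmult_1_r; apply Rabs_pos_eq; nra). nra.
Qed.

Lemma Cmod_ge0 (x : C) : 0 <= Cmod x.
Proof. apply Cmod_ge_0. Qed.

Lemma is_derive_C_eps (f : C -> C) (z l : C) :
  is_derive f z l ->
  forall eps, 0 < eps -> exists delta, 0 < delta /\
    forall w, Cmod (w - z) < delta ->
      Cmod (f w - f z - l * (w - z)) <= eps * Cmod (w - z).
Proof.
  intros [_ Hd] eps Heps.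
  specialize (Hd z (fun P HP => HP) (mkposreal eps Heps)).
  destruct Hd as [d Hd].
  exists d. split. apply cond_pos.
  intros w Hw.
  specialize (Hd w Hw). simpl in Hd.
  replace (f w - f z - l * (w - z))%C with (minus (minus (f w) (f z)) (scal (minus w z) l)).
  exact Hd. unfold minus, plus, opp, scal; simpl. unfold mult; simpl. ring.
Qed.

Lemma is_derive_C_eps_inv (f : C -> C) (z l : C) :
  (forall eps, 0 < eps -> exists delta, 0 < delta /\
    forall w, Cmod (w - z) < delta ->
      Cmod (f w - f z - l * (w - z)) <= eps * Cmod (w - z)) ->
  is_derive f z l.
Proof.
  intros H. split.
  - apply is_linear_scal_l.
  - intros x Hx. apply (@is_filter_lim_locally_unique C_AbsRing (AbsRing_NormedModule C_AbsRing)) in Hx. subst x.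
    intros [eps Heps].
    destruct (H eps Heps) as [d [Hd H1]].
    exists (mkposreal _ Hd). intros w Hw. simpl.
    specialize (H1 w Hw).
    change (Cmod (f w - f z - (w - z) * l)%C <= eps * Cmod (w - z)%C).
    rewrite (Cmult_comm (w - z) l). exact H1.
Qed.

Definition Ccont (f : C -> C) (z : C) : Prop :=
  forall eps, 0 < eps -> exists delta, 0 < delta /\
    forall w, Cmod (w - z) < delta -> Cmod (f w - f z) < eps.

Lemma is_derive_Ccont (f : C -> C) (z l : C) : is_derive f z l -> Ccont f z.
Proof.
  intros Hd eps Heps.
  destruct (is_derive_C_eps f z l Hd 1 Rlt_0_1) as [d [Hd0 H1]].
  set (d' := Rmin d (eps / (1 + Cmod l + 1))).
  assert (Hl := Cmod_ge0 l).
  assert (Hd' : 0 < d') by (apply Rmin_pos; auto; apply Rdiv_lt_0_compat; lra).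
  exists d'. split; auto. intros w Hw.
  assert (Hw1 : Cmod (w - z) < d) by (eapply Rlt_le_trans; [exact Hw| apply Rmin_l]).
  assert (Hw2 : Cmod (w - z) < eps / (1 + Cmod l + 1)) by (eapply Rlt_le_trans; [exact Hw| apply Rmin_r]).
  specialize (H1 w Hw1).
  replace (f w - f z)%C with ((f w - f z - l * (w - z)) + l * (w - z))%C by ring.
  eapply Rle_lt_trans. apply Cmod_triangle. rewrite Cmod_mult.
  assert (Hwz := Cmod_ge0 (w - z)).
  apply Rmult_lt_compat_r with (r := 1 + Cmod l + 1) in Hw2; [|lra].
  unfold Rdiv in Hw2. rewrite Rmult_assoc, Rinv_l, Rmult_1_r in Hw2 by lra.
  nra.
Qed.

Lemma ex_derive_Ccont (f : C -> C) (z : C) : ex_derive f z -> Ccont f z.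
Proof. intros [l Hl]. eapply is_derive_Ccont; eauto. Qed.

Lemma continuous_RC_eps_inv (f : R -> C) (x : R) :
  (forall eps, 0 < eps -> exists delta, 0 < delta /\
    forall y, Rabs (y - x) < delta -> Cmod (f y - f x) < eps) ->
  @continuous R_UniformSpace C_R_NormedModule f x.
Proof.
  intros H P [e He].
  destruct (H e (cond_pos e)) as [d [Hd H1]].
  exists (mkposreal _ Hd). intros y Hy. apply He.
  specialize (H1 y Hy). 
  split; simpl; unfold ball; simpl; unfold AbsRing_ball, abs, minus, plus, opp; simpl.
  - eapply Rle_lt_trans; [|exact H1]. 
    replace (fst (f y) + - fst (f x)) with (fst (f y - f x)%C) by (simpl; ring). apply Cmod_fst_le.
  - eapply Rle_lt_trans; [|exact H1]. 
    replace (snd (f y) + - snd (f x)) with (snd (f y - f x)%C) by (simpl; ring). apply Cmod_snd_le.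
Qed.

Lemma is_derive_C_eps_abs (f : C -> C) (z l : C) :
  @is_derive C_AbsRing (AbsRing_NormedModule C_AbsRing) f z l ->
  forall eps, 0 < eps -> exists delta, 0 < delta /\
    forall w, Cmod (w - z) < delta ->
      Cmod (f w - f z - l * (w - z)) <= eps * Cmod (w - z).
Proof.
  intros [_ Hd] eps Heps.
  specialize (Hd z (fun P HP => HP) (mkposreal eps Heps)).
  destruct Hd as [d Hd].
  exists d. split. apply cond_pos.
  intros w Hw.
  specialize (Hd w Hw). simpl in Hd.
  change (Cmod (f w - f z - (w - z) * l)%C <= eps * Cmod (w - z)%C) in Hd.
  rewrite (Cmult_comm (w - z) l) in Hd. exact Hd.
Qed.

Lemma is_derive_C_eps_inv_abs (f : C -> C) (z l : C) :
  (forall eps, 0 < eps -> exists delta, 0 < delta /\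
    forall w, Cmod (w - z) < delta ->
      Cmod (f w - f z - l * (w - z)) <= eps * Cmod (w - z)) ->
  @is_derive C_AbsRing (AbsRing_NormedModule C_AbsRing) f z l.
Proof.
  intros H. split.
  - apply is_linear_scal_l.
  - intros x Hx. apply (@is_filter_lim_locally_unique C_AbsRing (AbsRing_NormedModule C_AbsRing)) in Hx. subst x.
    intros [eps Heps].
    destruct (H eps Heps) as [d [Hd H1]].
    exists (mkposreal _ Hd). intros w Hw. simpl.
    specialize (H1 w Hw).
    change (Cmod (f w - f z - (w - z) * l)%C <= eps * Cmod (w - z)%C).
    rewrite (Cmult_comm (w - z) l). exact H1.
Qed.

Definition CD (f : C -> C) (z l : C) : Prop := @is_derive C_AbsRing C_NormedModule f z l.

Lemma CD_of_abs f z l : @is_derive C_AbsRing (AbsRing_NormedModule C_AbsRing) f z l -> CD f z l.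
Proof. intros H. apply is_derive_C_eps_inv, is_derive_C_eps_abs, H. Qed.
Lemma CD_to_abs f z l : CD f z l -> @is_derive C_AbsRing (AbsRing_NormedModule C_AbsRing) f z l.
Proof. intros H. apply is_derive_C_eps_inv_abs, is_derive_C_eps, H. Qed.

Lemma CD_ex f z l : CD f z l -> C_holomorphic_at f z.
Proof. intros H. exists l. exact H. Qed.

Lemma CD_const (c z : C) : CD (fun _ => c) z 0.
Proof. apply (@is_derive_const C_AbsRing C_NormedModule). Qed.

Lemma CD_id (z : C) : CD (fun w => w) z 1.
Proof. apply CD_of_abs. exact (@is_derive_id C_AbsRing z). Qed.

Lemma CD_plus f g z a b : CD f z a -> CD g z b -> CD (fun w => f w + g w)%C z (a + b)%C.
Proof. intros Ha Hb. apply (@is_derive_plus C_AbsRing C_NormedModule f g z a b Ha Hb). Qed.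

Lemma CD_opp f z a : CD f z a -> CD (fun w => - f w)%C z (- a)%C.
Proof. intros Ha. apply (@is_derive_opp C_AbsRing C_NormedModule f z a Ha). Qed.

Lemma CD_minus f g z a b : CD f z a -> CD g z b -> CD (fun w => f w - g w)%C z (a - b)%C.
Proof. intros Ha Hb. apply (@is_derive_minus C_AbsRing C_NormedModule f g z a b Ha Hb). Qed.

Lemma CD_mult f g z a b : CD f z a -> CD g z b -> CD (fun w => f w * g w)%C z (a * g z + f z * b)%C.
Proof. intros Ha Hb. apply CD_of_abs. exact (@is_derive_mult C_AbsRing f g z a b (CD_to_abs _ _ _ Ha) (CD_to_abs _ _ _ Hb) (fun x y => Cmult_comm x y)). Qed.

Lemma CD_comp f g z a b : CD f z a -> CD g (f z) b -> CD (fun w => g (f w)) z (a * b)%C.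
Proof. intros Ha Hb. exact (@is_derive_comp C_AbsRing C_NormedModule g f z b a Hb (CD_to_abs _ _ _ Ha)). Qed.

Lemma CD_ext f g z a : (forall w, f w = g w) -> CD f z a -> CD g z a.
Proof. intros H Hf. apply (@is_derive_ext C_AbsRing C_NormedModule f g z a H Hf). Qed.

Lemma CD_ext_loc f g z a d : 0 < d -> (forall w, Cmod (w - z) < d -> f w = g w) -> CD f z a -> CD g z a.
Proof. intros Hd H Hf. apply (@is_derive_ext_loc C_AbsRing C_NormedModule f g z a).
  exists (mkposreal d Hd). intros w Hw. apply H. exact Hw. exact Hf. Qed.

Lemma CD_eq f z a b : CD f z a -> a = b -> CD f z b.
Proof. intros H E; subst; exact H. Qed.

Lemma CD_Cinv (z : C) : z <> 0%C -> CD Cinv z (- / (z * z))%C.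
Proof.
  intros Hz. apply is_derive_C_eps_inv. intros eps Heps.
  assert (Hm : 0 < Cmod z) by (apply Cmod_gt_0; auto).
  exists (Rmin (Cmod z / 2) (eps * (Cmod z * Cmod z * Cmod z) / 2)).
  split. apply Rmin_pos; [lra|]. apply Rdiv_lt_0_compat; [|lra]. repeat apply Rmult_lt_0_compat; auto.
  intros w Hw.
  assert (Hw1 : Cmod (w - z) < Cmod z / 2) by (eapply Rlt_le_trans; [exact Hw|apply Rmin_l]).
  assert (Hw2 : Cmod (w - z) < eps * (Cmod z * Cmod z * Cmod z) / 2) by (eapply Rlt_le_trans; [exact Hw|apply Rmin_r]).
  assert (Hwm : Cmod z / 2 < Cmod w).
  { assert (Cmod z <= Cmod w + Cmod (z - w)).
    { replace z with (w + (z - w))%C at 1 by ring. apply Cmod_triangle. }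
    replace (z - w)%C with (- (w - z))%C in H by ring. rewrite Cmod_opp in H. lra. }
  assert (Hw0 : w <> 0%C) by (intro E; subst; rewrite Cmod_0 in Hwm; lra).
  replace (/ w - / z - - / (z * z) * (w - z))%C with ((w - z) * (w - z) / (w * (z * z)))%C
    by (field; auto).
  rewrite Cmod_div by (apply Cmult_neq_0; auto; apply Cmult_neq_0; auto).
  rewrite !Cmod_mult.
  assert (Hd := Cmod_ge0 (w - z)).
  apply Rle_div_l. repeat apply Rmult_lt_0_compat; lra.
  assert (Cmod (w - z) * Cmod (w - z) <= eps * Cmod (w - z) * (Cmod w * (Cmod z * Cmod z))).
  { apply Rlt_le in Hw2. apply Rmult_le_compat_l with (r := Cmod (w - z)) in Hw2 ; [|lra].
    assert (eps * Cmod (w - z) * (Cmod z / 2 * (Cmod z * Cmod z)) <= eps * Cmod (w - z) * (Cmod w * (Cmod z * Cmod z))).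
    { apply Rmult_le_compat_l. apply Rmult_le_pos; lra. apply Rmult_le_compat_r. nra. lra. }
    nra. }
  lra.
Qed.

Lemma CD_inv f z a : CD f z a -> f z <> 0%C -> CD (fun w => / f w)%C z (- a / (f z * f z))%C.
Proof.
  intros Ha Hz. eapply CD_eq; [apply (CD_comp f Cinv z a _ Ha (CD_Cinv _ Hz))|].
  field. auto.
Qed.

Lemma CD_div f g z a b : CD f z a -> CD g z b -> g z <> 0%C ->
  CD (fun w => f w / g w)%C z ((a * g z - f z * b) / (g z * g z))%C.
Proof.
  intros Ha Hb Hz. 
  assert (H := CD_mult f (fun w => / g w)%C z a _ Ha (CD_inv g z b Hb Hz)).
  eapply CD_eq; [exact H|]. cbv beta. field. auto.
Qed.

Lemma CD_scal f z a c : CD f z a -> CD (fun w => c * f w)%C z (c * a)%C.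
Proof.
  intros Ha. assert (H := CD_mult (fun _ => c) f z 0 a (CD_const c z) Ha).
  eapply CD_eq; [exact H|]. cbv beta. ring.
Qed.

Lemma MVT_bound (f df : R -> R) (a b M : R) :
  (forall x, is_derive f x (df x)) ->
  (forall c, Rmin a b <= c <= Rmax a b -> Rabs (df c) <= M) ->
  Rabs (f b - f a) <= M * Rabs (b - a).
Proof.
  intros Hd HM.
  destruct (MVT_gen f a b df) as [c [Hc E]].
  - intros; apply Hd.
  - intros x _. apply continuity_pt_filterlim. apply (ex_derive_continuous f x). eexists; apply Hd.
  - rewrite E, Rabs_mult. apply Rmult_le_compat_r. apply Rabs_pos. apply HM; auto.
Qed.

Lemma exp_le_e (u : R) : u <= 1 -> exp u <= 3.
Proof. intros H. destruct (Rle_lt_or_eq_dec _ _ H). apply Rlt_le; eapply Rlt_le_trans; [apply exp_increasing; eauto|apply exp_le_3]. subst; apply exp_le_3. Qed.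

Lemma abs_le_1 c u : Rmin 0 u <= c <= Rmax 0 u -> Rabs c <= Rabs u.
Proof. intros [H1 H2]. unfold Rmin, Rmax in *. destruct (Rle_dec 0 u); unfold Rabs; repeat destruct Rcase_abs; lra. Qed.

Lemma MVT_bound0 (f df : R -> R) (u M : R) :
  (forall x, is_derive f x (df x)) ->
  (forall c, Rabs c <= Rabs u -> Rabs (df c) <= M) ->
  Rabs (f u - f 0) <= M * Rabs u.
Proof.
  intros Hd HM. assert (H := MVT_bound f df 0 u M Hd).
  replace (Rabs u) with (Rabs (u - 0)). apply H.
  intros c Hc; apply HM, abs_le_1, Hc.
  f_equal; ring.
Qed.

Lemma bound_exp1 (u : R) : Rabs u <= 1 -> Rabs (exp u - 1) <= 3 * Rabs u.
Proof.
  intros Hu. rewrite <- exp_0.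
  apply MVT_bound0 with (df := exp). apply is_derive_exp.
  intros c Hc. rewrite Rabs_pos_eq by (apply Rlt_le, exp_pos).
  apply exp_le_e. apply Rabs_le_between in Hc. lra.
Qed.

Lemma bound_exp2 (u : R) : Rabs u <= 1 -> Rabs (exp u - 1 - u) <= 3 * u * u.
Proof.
  intros Hu.
  assert (H := MVT_bound0 (fun x => exp x - 1 - x) (fun x => exp x - 1) u (3 * Rabs u)).
  cbv beta in H. rewrite exp_0 in H. replace (exp u - 1 - u - (1 - 1 - 0)) with (exp u - 1 - u) in H by ring.
  replace (3 * u * u) with (3 * Rabs u * Rabs u) by (rewrite Rmult_assoc, <- Rabs_mult; rewrite Rabs_pos_eq by nra; ring).
  apply H.
  - intros x. auto_derive; auto; ring.
  - intros c Hc. eapply Rle_trans. apply bound_exp1. lra. lra.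
Qed.

Lemma bound_sin1 (v : R) : Rabs (sin v) <= Rabs v.
Proof.
  rewrite <- (Rmult_1_l (Rabs v)).
  replace (sin v) with (sin v - sin 0) by (rewrite sin_0; ring).
  apply MVT_bound0 with (df := cos). apply is_derive_sin.
  intros c _. apply Rabs_le, COS_bound.
Qed.

Lemma bound_cos2 (v : R) : Rabs (cos v - 1) <= v * v.
Proof.
  replace (v * v) with (Rabs v * Rabs v) by (rewrite <- Rabs_mult; rewrite Rabs_pos_eq by nra; ring).
  rewrite <- cos_0.
  apply MVT_bound0 with (df := fun x => - sin x). apply is_derive_cos.
  intros c Hc. rewrite Rabs_Ropp. eapply Rle_trans. apply bound_sin1. auto.
Qed.

Lemma bound_sin2 (v : R) : Rabs v <= 1 -> Rabs (sin v - v) <= v * v.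
Proof.
  intros Hv.
  assert (H := MVT_bound0 (fun x => sin x - x) (fun x => cos x - 1) v (v * v)).
  cbv beta in H. rewrite sin_0 in H. replace (sin v - v - (0 - 0)) with (sin v - v) in H by ring.
  replace (v * v) with (v * v * 1) by ring. eapply Rle_trans. apply H.
  - intros x. auto_derive; auto; ring.
  - intros c Hc. eapply Rle_trans. apply bound_cos2. 
    assert (Rabs c * Rabs c <= Rabs v * Rabs v) by (apply Rmult_le_compat; auto using Rabs_pos).
    rewrite <- !Rabs_mult in H0. rewrite !Rabs_pos_eq in H0 by nra. auto.
  - apply Rmult_le_compat_l. nra. auto.
Qed.

Definition cexp (z : C) : C := (exp (fst z) * cos (snd z), exp (fst z) * sin (snd z)).

Lemma cexp_plus (z w : C) : cexp (z + w)%C = (cexp z * cexp w)%C.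
Proof.
  destruct z as [a b], w as [c d]. unfold cexp; simpl. rewrite exp_plus, cos_plus, sin_plus.
  apply injective_projections; simpl; ring.
Qed.

Lemma Cmod_cexp (z : C) : Cmod (cexp z) = exp (fst z).
Proof.
  destruct z as [a b]. unfold cexp, Cmod; simpl.
  replace ((exp a * cos b) * ((exp a * cos b) * 1) + (exp a * sin b) * ((exp a * sin b) * 1))
    with ((exp a)^2 * (sin b ^2 + cos b ^2)) by ring.
  rewrite <- !Rsqr_pow2, sin2_cos2, Rmult_1_r. rewrite Rsqr_pow2. apply sqrt_pow2. apply Rlt_le, exp_pos.
Qed.

Lemma cexp_ne0 (z : C) : cexp z <> 0%C.
Proof. intro E. assert (H := Cmod_cexp z). rewrite E, Cmod_0 in H. generalize (exp_pos (fst z)). lra. Qed.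

Lemma cexp_period (x y : R) : cexp (x, y + 2 * PI) = cexp (x, y).
Proof.
  unfold cexp; simpl. rewrite cos_plus, sin_plus, cos_2PI, sin_2PI.
  apply injective_projections; simpl; ring.
Qed.

Lemma cexp_bound (h : C) : Cmod h <= 1 -> Cmod (cexp h - 1 - h) <= 12 * (Cmod h * Cmod h).
Proof.
  intros Hh. destruct h as [u v].
  assert (Hu := Cmod_fst_le (u, v)). assert (Hv := Cmod_snd_le (u,v)). simpl in Hu, Hv.
  set (m := Cmod (u, v)) in *.
  eapply Rle_trans. apply Cmod_le_sum.
  assert (E1 : fst (cexp (u,v) - 1 - (u,v))%C = exp u * cos v - 1 - u) by (unfold cexp; simpl; ring).
  assert (E2 : snd (cexp (u,v) - 1 - (u,v))%C = exp u * sin v - v) by (unfold cexp; simpl; ring).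
  rewrite E1, E2.
  assert (Eu : exp u <= 3) by (apply exp_le_e; apply Rabs_le_between in Hu; lra).
  assert (Ep : 0 < exp u) by apply exp_pos.
  assert (H1 := bound_exp2 u ltac:(lra)).
  assert (H2 := bound_cos2 v).
  assert (H3 := bound_sin2 v ltac:(lra)).
  assert (H4 := bound_exp1 u ltac:(lra)).
  assert (R1 : Rabs (exp u * cos v - 1 - u) <= 3 * u * u + 3 * (v * v)).
  { replace (exp u * cos v - 1 - u) with ((exp u - 1 - u) + exp u * (cos v - 1)) by ring.
    eapply Rle_trans. apply Rabs_triang. rewrite Rabs_mult, (Rabs_pos_eq (exp u)) by lra.
    assert (exp u * Rabs (cos v - 1) <= 3 * (v * v)) by (apply Rmult_le_compat; auto using Rabs_pos; lra). lra. }
  assert (R2 : Rabs (exp u * sin v - v) <= 3 * (v * v) + 3 * Rabs u * Rabs v).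
  { replace (exp u * sin v - v) with (exp u * (sin v - v) + (exp u - 1) * v) by ring.
    eapply Rle_trans. apply Rabs_triang. rewrite !Rabs_mult, (Rabs_pos_eq (exp u)) by lra.
    assert (exp u * Rabs (sin v - v) <= 3 * (v * v)) by (apply Rmult_le_compat; auto using Rabs_pos; lra).
    assert (Rabs (exp u - 1) * Rabs v <= 3 * Rabs u * Rabs v) by (apply Rmult_le_compat_r; auto using Rabs_pos).
    lra. }
  replace (exp u * cos v - 1 - u) with (exp u * cos v - 1 - u) in R1 by ring.
  assert (Ruu : u * u <= m * m) by (rewrite <- (Rabs_pos_eq (u*u)) by nra; rewrite Rabs_mult; apply Rmult_le_compat; auto using Rabs_pos).
  assert (Rvv : v * v <= m * m) by (rewrite <- (Rabs_pos_eq (v*v)) by nra; rewrite Rabs_mult; apply Rmult_le_compat; auto using Rabs_pos).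
  assert (Ruv : Rabs u * Rabs v <= m * m) by (apply Rmult_le_compat; auto using Rabs_pos).
  lra.
Qed.

Lemma CD_cexp (z : C) : CD cexp z (cexp z).
Proof.
  apply is_derive_C_eps_inv. intros eps Heps.
  assert (Hc := Cmod_ge0 (cexp z)).
  exists (Rmin 1 (eps / (12 * Cmod (cexp z) + 1))). split.
  apply Rmin_pos; [lra|]. apply Rdiv_lt_0_compat; lra.
  intros w Hw.
  assert (Hw1 : Cmod (w - z) < 1) by (eapply Rlt_le_trans; [exact Hw|apply Rmin_l]).
  assert (Hw2 : Cmod (w - z) < eps / (12 * Cmod (cexp z) + 1)) by (eapply Rlt_le_trans; [exact Hw|apply Rmin_r]).
  replace (cexp w - cexp z - cexp z * (w - z))%C with (cexp z * (cexp (w - z) - 1 - (w - z)))%C.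
  2:{ assert (E : cexp w = (cexp z * cexp (w - z))%C) by (rewrite <- cexp_plus; f_equal; ring). rewrite E; ring. }
  rewrite Cmod_mult.
  assert (B := cexp_bound (w - z) ltac:(lra)).
  assert (Hd := Cmod_ge0 (w - z)).
  apply Rmult_lt_compat_r with (r := 12 * Cmod (cexp z) + 1) in Hw2; [|lra].
  unfold Rdiv in Hw2. rewrite Rmult_assoc, Rinv_l, Rmult_1_r in Hw2 by lra.
  assert (Cmod (cexp z) * Cmod (cexp (w - z) - 1 - (w - z)) <= Cmod (cexp z) * (12 * (Cmod (w - z) * Cmod (w - z)))) by (apply Rmult_le_compat_l; auto).
  nra.
Qed.

Definition CInt (f : R -> C) (a b : R) : C := @RInt C_R_CompleteNormedModule f a b.
Definition CisInt (f : R -> C) (a b : R) (l : C) : Prop := @is_RInt C_R_NormedModule f a b l.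
Definition CexInt (f : R -> C) (a b : R) : Prop := @ex_RInt C_R_NormedModule f a b.

Definition RCcont (f : R -> C) (x : R) : Prop :=
  forall eps, 0 < eps -> exists delta, 0 < delta /\
    forall y, Rabs (y - x) < delta -> Cmod (f y - f x) < eps.

Lemma CexInt_cont f a b : (forall x, Rmin a b <= x <= Rmax a b -> RCcont f x) -> CexInt f a b.
Proof.
  intros H. apply (@ex_RInt_continuous C_R_CompleteNormedModule).
  intros z Hz. apply continuous_RC_eps_inv. apply H, Hz.
Qed.

Lemma CInt_correct f a b : CexInt f a b -> CisInt f a b (CInt f a b).
Proof. intros H. apply (@RInt_correct C_R_CompleteNormedModule), H. Qed.

Lemma CInt_unique f a b l : CisInt f a b l -> CInt f a b = l.
Proof. intros H. apply (@is_RInt_unique C_R_CompleteNormedModule), H. Qed.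

Lemma CexInt_sym f a b : CexInt f a b -> CexInt f b a.
Proof. apply (@ex_RInt_swap C_R_NormedModule). Qed.

Lemma CInt_Chasles f a b c : CexInt f a b -> CexInt f b c -> (CInt f a b + CInt f b c)%C = CInt f a c.
Proof. intros H1 H2. apply (@RInt_Chasles C_R_CompleteNormedModule f a b c H1 H2). Qed.

Lemma CisInt_fst f a b l : CisInt f a b l -> is_RInt (fun t => fst (f t)) a b (fst l).
Proof. intros H. apply (@is_RInt_fct_extend_fst R_NormedModule R_NormedModule f a b l H). Qed.
Lemma CisInt_snd f a b l : CisInt f a b l -> is_RInt (fun t => snd (f t)) a b (snd l).
Proof. intros H. apply (@is_RInt_fct_extend_snd R_NormedModule R_NormedModule f a b l H). Qed.
Lemma CisInt_pair f a b l1 l2 : is_RInt (fun t => fst (f t)) a b l1 -> is_RInt (fun t => snd (f t)) a b l2 ->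
  CisInt f a b (l1, l2).
Proof. intros H1 H2. apply (@is_RInt_fct_extend_pair R_NormedModule R_NormedModule f a b l1 l2 H1 H2). Qed.

Lemma CisInt_ext f g a b l : (forall x, Rmin a b < x < Rmax a b -> f x = g x) -> CisInt f a b l -> CisInt g a b l.
Proof. intros H1 H2. apply (@is_RInt_ext C_R_NormedModule f g a b l H1 H2). Qed.

Lemma CInt_ext f g a b : (forall x, Rmin a b < x < Rmax a b -> f x = g x) -> CInt f a b = CInt g a b.
Proof. intros H. apply (@RInt_ext C_R_CompleteNormedModule f g a b H). Qed.

Lemma CisInt_lin f a b l (p q : C) : CisInt f a b l -> CisInt (fun t => p * f t + q)%C a b (p * l + (b - a) * q)%C.
Proof.
  intros H. assert (H1 := CisInt_fst _ _ _ _ H). assert (H2 := CisInt_snd _ _ _ _ H).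
  destruct p as [p1 p2], q as [q1 q2], l as [l1 l2]. simpl in *.
  replace ((p1, p2) * (l1, l2) + (b - a) * (q1, q2))%C with
    (p1 * l1 - p2 * l2 + (b - a) * q1, p1 * l2 + p2 * l1 + (b - a) * q2) by
    (apply injective_projections; simpl; ring).
  apply CisInt_pair; simpl.
  - apply (is_RInt_plus (V:=R_NormedModule) (fun t => p1 * fst (f t) + - (p2 * snd (f t))) (fun _ => q1)).
    apply (is_RInt_minus (V:=R_NormedModule) (fun t => p1 * fst (f t)) (fun t => p2 * snd (f t))).
    apply (is_RInt_scal (V:=R_NormedModule)); auto. apply (is_RInt_scal (V:=R_NormedModule)); auto.
    exact (is_RInt_const (V:=R_NormedModule) a b _).
  - apply (is_RInt_plus (V:=R_NormedModule) (fun t => p1 * snd (f t) + p2 * fst (f t)) (fun _ => q2)).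
    apply (is_RInt_plus (V:=R_NormedModule) (fun t => p1 * snd (f t)) (fun t => p2 * fst (f t))).
    apply (is_RInt_scal (V:=R_NormedModule)); auto. apply (is_RInt_scal (V:=R_NormedModule)); auto.
    exact (is_RInt_const (V:=R_NormedModule) a b _).
Qed.

Lemma normCR (x : C) : @norm _ C_R_NormedModule x = Cmod x.
Proof.
  destruct x as [a b]. unfold norm. simpl. unfold prod_norm. simpl. unfold Cmod. simpl. unfold abs; simpl.
  f_equal. rewrite !Rmult_1_r. rewrite <- !Rabs_mult. rewrite !Rabs_pos_eq by nra. ring.
Qed.

Lemma CisInt_plus f g a b l1 l2 : CisInt f a b l1 -> CisInt g a b l2 -> CisInt (fun t => f t + g t)%C a b (l1 + l2)%C.
Proof. intros H1 H2. apply (@is_RInt_plus C_R_NormedModule f g a b l1 l2 H1 H2). Qed.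

Lemma CisInt_minus f g a b l1 l2 : CisInt f a b l1 -> CisInt g a b l2 -> CisInt (fun t => f t - g t)%C a b (l1 - l2)%C.
Proof. intros H1 H2. apply (@is_RInt_minus C_R_NormedModule f g a b l1 l2 H1 H2). Qed.

Lemma CisInt_norm f a b l M : a <= b -> (forall x, a <= x <= b -> Cmod (f x) <= M) -> CisInt f a b l ->
  Cmod l <= (b - a) * M.
Proof.
  intros Hab HM Hl. rewrite <- normCR. apply (@norm_RInt_le_const C_R_NormedModule f a b l M Hab); auto.
  intros x Hx. rewrite normCR. auto.
Qed.

Lemma CisInt_const (c : C) a b : CisInt (fun _ => c) a b ((b - a) * c)%C.
Proof.
  destruct c as [c1 c2].
  replace ((b - a) * (c1, c2))%C with ((b - a) * c1, (b - a) * c2) by (apply injective_projections; simpl; ring).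
  apply CisInt_pair; simpl; exact (is_RInt_const (V:=R_NormedModule) a b _).
Qed.

Lemma is_RInt_id a b : is_RInt (fun x => x) a b ((b * b - a * a) / 2).
Proof.
  replace ((b * b - a * a) / 2) with (minus (b * b / 2) (a * a / 2)) by (unfold minus, plus, opp; simpl; field).
  apply (is_RInt_derive (fun x => x * x / 2) (fun x => x)).
  - intros x _. auto_derive; auto. field.
  - intros x _. apply continuous_id.
Qed.

Lemma CisInt_hx a b y : CisInt (fun x => (x, y)) a b ((b * b - a * a) / 2, (b - a) * y).
Proof.
  apply CisInt_pair; simpl. apply is_RInt_id. exact (is_RInt_const (V:=R_NormedModule) a b _).
Qed.

Lemma CisInt_vy c d x : CisInt (fun y => (x, y)) c d ((d - c) * x, (d * d - c * c) / 2).
Proof.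
  apply CisInt_pair; simpl. exact (is_RInt_const (V:=R_NormedModule) c d _). apply is_RInt_id.
Qed.

Definition Rc (S : C -> C) a b c d := forall x y, a <= x <= b -> c <= y <= d -> Ccont S (x, y).

Definition Gam (S : C -> C) a b c d : C :=
  (CInt (fun x => S (x, c)) a b + Ci * CInt (fun y => S (b, y)) c d
   - CInt (fun x => S (x, d)) a b - Ci * CInt (fun y => S (a, y)) c d)%C.

Lemma Ccont_h S x y : Ccont S (x, y) -> RCcont (fun t => S (t, y)) x.
Proof.
  intros H eps Heps. destruct (H eps Heps) as [d [Hd H1]]. exists d; split; auto.
  intros t Ht. apply H1.
  replace ((t, y) - (x, y))%C with (RtoC (t - x)) by (apply injective_projections; simpl; ring).
  rewrite Cmod_R. auto.
Qed.

Lemma Ccont_v S x y : Ccont S (x, y) -> RCcont (fun t => S (x, t)) y.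
Proof.
  intros H eps Heps. destruct (H eps Heps) as [d [Hd H1]]. exists d; split; auto.
  intros t Ht. apply H1.
  replace ((x, t) - (x, y))%C with (Ci * RtoC (t - y))%C by (apply injective_projections; simpl; ring).
  rewrite Cmod_mult, Cmod_R. unfold Cmod at 1; simpl. 
  replace (0 * (0 * 1) + 1 * (1 * 1)) with 1 by ring. rewrite sqrt_1. lra.
Qed.

Lemma Rc_h S a b c d y : a <= b -> Rc S a b c d -> c <= y <= d -> CexInt (fun x => S (x, y)) a b.
Proof.
  intros Hab H Hy. apply CexInt_cont. intros x Hx. rewrite Rmin_left, Rmax_right in Hx by lra.
  apply Ccont_h, H; auto.
Qed.

Lemma Rc_v S a b c d x : c <= d -> Rc S a b c d -> a <= x <= b -> CexInt (fun y => S (x, y)) c d.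
Proof.
  intros Hcd H Hx. apply CexInt_cont. intros y Hy. rewrite Rmin_left, Rmax_right in Hy by lra.
  apply Ccont_v, H; auto.
Qed.

Lemma Rc_sub S a b c d a' b' c' d' : a <= a' -> b' <= b -> c <= c' -> d' <= d ->
  Rc S a b c d -> Rc S a' b' c' d'.
Proof. intros H1 H2 H3 H4 H x y Hx Hy. apply H; lra. Qed.

Lemma Gam_split_x S a m b c d : a <= m <= b -> c <= d -> Rc S a b c d ->
  Gam S a b c d = (Gam S a m c d + Gam S m b c d)%C.
Proof.
  intros Hm Hcd H. unfold Gam.
  rewrite <- (CInt_Chasles (fun x => S (x, c)) a m b).
  rewrite <- (CInt_Chasles (fun x => S (x, d)) a m b).
  ring.
  all: first [apply (Rc_h S a m c d); [lra|apply (Rc_sub S a b c d); try lra; exact H|lra]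
             |apply (Rc_h S m b c d); [lra|apply (Rc_sub S a b c d); try lra; exact H|lra]].
Qed.

Lemma Gam_split_y S a b c n d : a <= b -> c <= n <= d -> Rc S a b c d ->
  Gam S a b c d = (Gam S a b c n + Gam S a b n d)%C.
Proof.
  intros Hab Hn H. unfold Gam.
  rewrite <- (CInt_Chasles (fun y => S (b, y)) c n d).
  rewrite <- (CInt_Chasles (fun y => S (a, y)) c n d).
  ring.
  all: first [apply (Rc_v S a b c n); [lra|apply (Rc_sub S a b c d); try lra; exact H|lra]
             |apply (Rc_v S a b n d); [lra|apply (Rc_sub S a b c d); try lra; exact H|lra]].
Qed.

Lemma Gam_affine_sub S (A B : C) a b c d : a <= b -> c <= d -> Rc S a b c d ->
  Gam (fun w => S w - (B * w + A))%C a b c d = Gam S a b c d.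
Proof.
  intros Hab Hcd H.
  assert (E1 : forall y, c <= y <= d -> CInt (fun x => S (x, y) - (B * (x, y) + A))%C a b =
     (CInt (fun x => S (x, y)) a b - (B * (((b * b - a * a) / 2)%R, ((b - a) * y)%R) + (b - a) * A))%C).
  { intros y Hy. apply CInt_unique. apply CisInt_minus. apply CInt_correct. apply (Rc_h S a b c d); auto.
    apply CisInt_lin. apply CisInt_hx. }
  assert (E2 : forall x, a <= x <= b -> CInt (fun y => S (x, y) - (B * (x, y) + A))%C c d =
     (CInt (fun y => S (x, y)) c d - (B * (((d - c) * x)%R, ((d * d - c * c) / 2)%R) + (d - c) * A))%C).
  { intros x Hx. apply CInt_unique. apply CisInt_minus. apply CInt_correct. apply (Rc_v S a b c d); auto.
    apply CisInt_lin. apply CisInt_vy. }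
  unfold Gam. rewrite !E1, !E2 by lra.
  apply injective_projections; simpl; ring.
Qed.

Lemma Gam_bound S a b c d M : a <= b -> c <= d -> Rc S a b c d ->
  (forall x y, a <= x <= b -> c <= y <= d -> Cmod (S (x, y)) <= M) ->
  Cmod (Gam S a b c d) <= 2 * ((b - a) + (d - c)) * M.
Proof.
  intros Hab Hcd H HM.
  assert (Hci : Cmod Ci = 1) by (unfold Cmod; simpl; replace (0 * (0 * 1) + 1 * (1 * 1)) with 1 by ring; apply sqrt_1).
  assert (B1 : forall y, c <= y <= d -> Cmod (CInt (fun x => S (x, y)) a b) <= (b - a) * M).
  { intros y Hy. apply (CisInt_norm (fun x => S (x, y))); [exact Hab| intros; apply HM; auto |].
    apply CInt_correct, (Rc_h S a b c d); auto. }
  assert (B2 : forall x, a <= x <= b -> Cmod (CInt (fun y => S (x, y)) c d) <= (d - c) * M).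
  { intros x Hx. apply (CisInt_norm (fun y => S (x, y))); [exact Hcd| intros; apply HM; auto |].
    apply CInt_correct, (Rc_v S a b c d); auto. }
  unfold Gam.
  set (I1 := CInt (fun x => S (x, c)) a b). set (I2 := CInt (fun y => S (b, y)) c d).
  set (I3 := CInt (fun x => S (x, d)) a b). set (I4 := CInt (fun y => S (a, y)) c d).
  assert (C1 : Cmod I1 <= (b - a) * M) by (apply B1; lra).
  assert (C2 : Cmod I2 <= (d - c) * M) by (apply B2; lra).
  assert (C3 : Cmod I3 <= (b - a) * M) by (apply B1; lra).
  assert (C4 : Cmod I4 <= (d - c) * M) by (apply B2; lra).
  replace (I1 + Ci * I2 - I3 - Ci * I4)%C with (I1 + Ci * I2 + (- I3) + (- (Ci * I4)))%C by ring.
  eapply Rle_trans. apply Cmod_triangle.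
  eapply Rle_trans. apply Rplus_le_compat_r. apply Cmod_triangle.
  eapply Rle_trans. apply Rplus_le_compat_r. apply Rplus_le_compat_r. apply Cmod_triangle.
  rewrite !Cmod_opp, !Cmod_mult, Hci. lra.
Qed.

Record rect := mkR { ra : R; rb : R; rc : R; rd : R }.
Definition GamR F r := Gam F (ra r) (rb r) (rc r) (rd r).
Definition RcR F r := Rc F (ra r) (rb r) (rc r) (rd r).

Definition q1 r := mkR (ra r) ((ra r + rb r)/2) (rc r) ((rc r + rd r)/2).
Definition q2 r := mkR ((ra r + rb r)/2) (rb r) (rc r) ((rc r + rd r)/2).
Definition q3 r := mkR (ra r) ((ra r + rb r)/2) ((rc r + rd r)/2) (rd r).
Definition q4 r := mkR ((ra r + rb r)/2) (rb r) ((rc r + rd r)/2) (rd r).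

Definition step F r :=
  if Rle_dec (Cmod (GamR F r) / 4) (Cmod (GamR F (q1 r))) then q1 r
  else if Rle_dec (Cmod (GamR F r) / 4) (Cmod (GamR F (q2 r))) then q2 r
  else if Rle_dec (Cmod (GamR F r) / 4) (Cmod (GamR F (q3 r))) then q3 r
  else q4 r.

Lemma Gam_quad F r : ra r <= rb r -> rc r <= rd r -> RcR F r ->
  GamR F r = (GamR F (q1 r) + GamR F (q2 r) + GamR F (q3 r) + GamR F (q4 r))%C.
Proof.
  intros H1 H2 H. destruct r as [a b c d]. unfold GamR, RcR in *; simpl in *.
  rewrite (Gam_split_x F a ((a+b)/2) b c d) by (auto; lra).
  rewrite (Gam_split_y F a ((a+b)/2) c ((c+d)/2) d) by (try lra; apply (Rc_sub F a b c d); try lra; exact H).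
  rewrite (Gam_split_y F ((a+b)/2) b c ((c+d)/2) d) by (try lra; apply (Rc_sub F a b c d); try lra; exact H).
  ring.
Qed.

Lemma step_props F r : ra r <= rb r -> rc r <= rd r -> RcR F r ->
  let r' := step F r in
  ra r <= ra r' /\ rb r' <= rb r /\ rc r <= rc r' /\ rd r' <= rd r /\
  rb r' - ra r' = (rb r - ra r) / 2 /\ rd r' - rc r' = (rd r - rc r) / 2 /\
  Cmod (GamR F r) <= 4 * Cmod (GamR F r').
Proof.
  intros H1 H2 H r'. assert (E := Gam_quad F r H1 H2 H).
  assert (T : Cmod (GamR F r) <= Cmod (GamR F (q1 r)) + Cmod (GamR F (q2 r)) + Cmod (GamR F (q3 r)) + Cmod (GamR F (q4 r))).
  { rewrite E. eapply Rle_trans. apply Cmod_triangle. apply Rplus_le_compat_r.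
    eapply Rle_trans. apply Cmod_triangle. apply Rplus_le_compat_r. apply Cmod_triangle. }
  unfold r', step.
  set (g := Cmod (GamR F r)) in *. set (g1 := Cmod (GamR F (q1 r))) in *.
  set (g2 := Cmod (GamR F (q2 r))) in *. set (g3 := Cmod (GamR F (q3 r))) in *.
  set (g4 := Cmod (GamR F (q4 r))) in *.
  repeat match goal with |- context [Rle_dec ?x ?y] => destruct (Rle_dec x y) as [?|?%Rnot_le_lt] end;
  repeat split; try (fold g1 g2 g3 g4; lra); unfold q1, q2, q3, q4; simpl; lra.
Qed.


Fixpoint rseq F r0 n : rect := match n with O => r0 | Datatypes.S k => step F (rseq F r0 k) end.

Lemma rseq_props F r0 : ra r0 <= rb r0 -> rc r0 <= rd r0 -> RcR F r0 -> forall n,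
  let r := rseq F r0 n in
  ra r <= rb r /\ rc r <= rd r /\
  ra r0 <= ra r /\ rb r <= rb r0 /\ rc r0 <= rc r /\ rd r <= rd r0 /\
  rb r - ra r = (rb r0 - ra r0) / 2 ^ n /\ rd r - rc r = (rd r0 - rc r0) / 2 ^ n /\
  Cmod (GamR F r0) <= 4 ^ n * Cmod (GamR F r).
Proof.
  intros H1 H2 H. induction n as [|n IH]; simpl.
  - repeat split; try lra. 
  - destruct IH as [B1 [B2 [A1 [A2 [A3 [A4 [A5 [A6 A7]]]]]]]].
    set (r := rseq F r0 n) in *.
    assert (Hr : RcR F r) by (apply (Rc_sub F (ra r0) (rb r0) (rc r0) (rd r0)); auto).
    destruct (step_props F r B1 B2 Hr) as [C1 [C2 [C3 [C4 [C5 [C6 C7]]]]]].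
    set (r' := step F r) in *.
    assert (P : 0 < 2 ^ n) by (apply pow_lt; lra).
    repeat split; try lra.
    + rewrite C5, A5. field. lra.
    + rewrite C6, A6. field. lra.
    + assert (0 <= 4 ^ n) by (apply pow_le; lra). nra.
Qed.

Lemma rseq_mono F r0 : ra r0 <= rb r0 -> rc r0 <= rd r0 -> RcR F r0 -> forall n m, (n <= m)%nat ->
  ra (rseq F r0 n) <= ra (rseq F r0 m) /\ rb (rseq F r0 m) <= rb (rseq F r0 n) /\
  rc (rseq F r0 n) <= rc (rseq F r0 m) /\ rd (rseq F r0 m) <= rd (rseq F r0 n).
Proof.
  intros H1 H2 H n m Hnm. induction Hnm.
  - lra.
  - destruct (rseq_props F r0 H1 H2 H m) as [B1 [B2 [A1 [A2 [A3 [A4 _]]]]]].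
    assert (Hr : RcR F (rseq F r0 m)) by (apply (Rc_sub F (ra r0) (rb r0) (rc r0) (rd r0)); auto).
    destruct (step_props F _ B1 B2 Hr) as [C1 [C2 [C3 [C4 _]]]].
    simpl. lra.
Qed.

Lemma rseq_ab F r0 : ra r0 <= rb r0 -> rc r0 <= rd r0 -> RcR F r0 -> forall n m,
  ra (rseq F r0 n) <= rb (rseq F r0 m) /\ rc (rseq F r0 n) <= rd (rseq F r0 m).
Proof.
  intros H1 H2 H n m.
  destruct (rseq_props F r0 H1 H2 H (max n m)) as [B1 [B2 _]].
  destruct (rseq_mono F r0 H1 H2 H n (max n m) (Nat.le_max_l _ _)) as [C1 [_ [C3 _]]].
  destruct (rseq_mono F r0 H1 H2 H m (max n m) (Nat.le_max_r _ _)) as [_ [D2 [_ D4]]].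
  lra.
Qed.

Lemma Rc_of_holo F a b c d : (forall x y, a <= x <= b -> c <= y <= d -> C_holomorphic_at F (x, y)) -> Rc F a b c d.
Proof. intros H x y Hx Hy. apply ex_derive_Ccont, H; auto. Qed.

Lemma lub_seq (u v : nat -> R) : (forall n m, u n <= v m) ->
  { x | forall n, u n <= x <= v n }.
Proof.
  intros H.
  destruct (completeness (fun x => exists n, x = u n)) as [x [Hub Hlub]].
  - exists (v O). intros y [n ->]. apply H.
  - exists (u O). exists O. auto.
  - exists x. intros n. split.
    + apply Hub. exists n. auto.
    + apply Hlub. intros y [k ->]. apply H.
Qed.

Lemma small_pow (K d : R) : 0 < d -> 0 <= K -> exists n : nat, K / 2 ^ n < d.
Proof.
  intros Hd HK.
  destruct (pow_lt_1_zero (/2) ltac:(rewrite Rabs_pos_eq; lra) (d / (K + 1)) ltac:(apply Rdiv_lt_0_compat; lra)) as [N HN].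
  exists N. specialize (HN N (le_n _)). rewrite Rabs_pos_eq in HN by (apply pow_le; lra).
  rewrite <- Rinv_pow in HN by lra.
  assert (P : 0 < 2 ^ N) by (apply pow_lt; lra).
  unfold Rdiv. 
  apply Rmult_lt_compat_l with (r := K + 1) in HN; [|lra].
  replace ((K + 1) * (d / (K + 1))) with d in HN by (field; lra).
  assert (0 < / 2 ^ N) by (apply Rinv_0_lt_compat; auto). nra.
Qed.

Theorem goursat F a b c d : a <= b -> c <= d ->
  (forall x y, a <= x <= b -> c <= y <= d -> C_holomorphic_at F (x, y)) ->
  Gam F a b c d = 0%C.
Proof.
  intros Hab Hcd HD.
  assert (HR : Rc F a b c d) by (apply Rc_of_holo; auto).
  set (r0 := mkR a b c d).
  assert (P := rseq_props F r0 Hab Hcd HR).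
  assert (Q := rseq_ab F r0 Hab Hcd HR).
  destruct (lub_seq (fun n => ra (rseq F r0 n)) (fun n => rb (rseq F r0 n))) as [xs Hxs].
  { intros n m; apply Q. }
  destruct (lub_seq (fun n => rc (rseq F r0 n)) (fun n => rd (rseq F r0 n))) as [ys Hys].
  { intros n m; apply Q. }
  assert (Hzx : a <= xs <= b) by (destruct (Hxs O); simpl in *; lra).
  assert (Hzy : c <= ys <= d) by (destruct (Hys O); simpl in *; lra).
  destruct (HD xs ys Hzx Hzy) as [L HL].
  set (W := (b - a) + (d - c)).
  assert (HW : 0 <= W) by (unfold W; lra).
  set (g := Cmod (Gam F a b c d)).
  assert (Key : forall eps, 0 < eps -> g <= 2 * eps * (W * W)).
  { intros eps Heps.
    destruct (is_derive_C_eps F (xs, ys) L HL eps Heps) as [delta [Hdelta Hd]].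
    destruct (small_pow W delta Hdelta HW) as [n Hn].
    destruct (P n) as [B1 [B2 [A1 [A2 [A3 [A4 [A5 [A6 A7]]]]]]]].
    set (r := rseq F r0 n) in *. simpl in A1, A2, A3, A4, A5, A6.
    assert (P2 : 0 < 2 ^ n) by (apply pow_lt; lra).
    assert (Hr : RcR F r) by (apply (Rc_sub F a b c d); auto).
    set (A := (F (xs, ys) - L * (xs, ys))%C).
    assert (EG : GamR F r = Gam (fun w => F w - (L * w + A))%C (ra r) (rb r) (rc r) (rd r)).
    { unfold GamR. symmetry. apply Gam_affine_sub; auto. }
    assert (Hx := Hxs n). assert (Hy := Hys n). simpl in Hx, Hy. fold r in Hx, Hy.
    assert (BD : Cmod (GamR F r) <= 2 * ((rb r - ra r) + (rd r - rc r)) * (eps * (W / 2 ^ n))).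
    { rewrite EG. apply Gam_bound; auto.
      - apply Rc_of_holo. intros x y Hx' Hy'.
        destruct (HD x y ltac:(lra) ltac:(lra)) as [l Hl].
        eexists. apply CD_minus. exact Hl. apply CD_plus. apply CD_scal. apply CD_id. apply CD_const.
      - intros x y Hx' Hy'.
        assert (Dist : Cmod ((x, y) - (xs, ys)) <= W / 2 ^ n).
        { eapply Rle_trans. apply Cmod_le_sum. simpl.
          unfold W. replace ((b - a + (d - c)) / 2 ^ n) with ((b - a) / 2 ^ n + (d - c) / 2 ^ n) by (field; lra).
          rewrite <- A5, <- A6. 
          replace (x + - xs) with (x - xs) by ring. replace (y + - ys) with (y - ys) by ring.
          unfold Rabs; repeat destruct Rcase_abs; lra. }
        replace (F (x, y) - (L * (x, y) + A))%C with (F (x, y) - F (xs, ys) - L * ((x, y) - (xs, ys)))%C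
          by (unfold A; ring).
        eapply Rle_trans. apply Hd. lra.
        apply Rmult_le_compat_l; lra. }
    rewrite A5, A6 in BD.
    replace (2 * ((b - a) / 2 ^ n + (d - c) / 2 ^ n) * (eps * (W / 2 ^ n))) with
      (2 * eps * (W * W) / (2 ^ n * 2 ^ n)) in BD by (unfold W; field; lra).
    assert (E4 : 4 ^ n = 2 ^ n * 2 ^ n) by (rewrite <- Rpow_mult_distr; f_equal; ring).
    unfold g. unfold GamR in A7. simpl in A7. fold r in A7.
    eapply Rle_trans. apply A7. rewrite E4.
    apply Rmult_le_compat_l with (r := 2 ^ n * 2 ^ n) in BD; [|nra].
    replace (2 ^ n * 2 ^ n * (2 * eps * (W * W) / (2 ^ n * 2 ^ n))) with (2 * eps * (W * W)) in BD by (field; lra).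
    unfold GamR in BD. exact BD. }
  apply Cmod_eq_0. fold g.
  assert (Hg : 0 <= g) by apply Cmod_ge0.
  destruct (Rle_lt_or_eq_dec 0 g Hg) as [Hlt|]; auto.
  exfalso. assert (HWW : 0 <= W * W) by nra.
  specialize (Key (g / (2 * (W * W) + 1)) ltac:(apply Rdiv_lt_0_compat; lra)).
  replace (2 * (g / (2 * (W * W) + 1)) * (W * W)) with (g * (2 * (W * W) / (2 * (W * W) + 1))) in Key by (field; lra).
  assert (2 * (W * W) / (2 * (W * W) + 1) < 1). { apply Rmult_lt_reg_r with (2*(W*W)+1); [lra|]. unfold Rdiv. rewrite Rmult_assoc, Rinv_l by lra. lra. }
  nra.
Qed.

Lemma small_pos_zero (g K : R) : 0 <= g -> 0 <= K -> (exists d0, 0 < d0 /\ forall d, 0 < d < d0 -> g <= d * K) -> g = 0.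
Proof.
  intros Hg HK [d0 [Hd0 H]].
  destruct (Rle_lt_or_eq_dec 0 g Hg) as [Hlt|]; auto. exfalso.
  set (d := Rmin (d0 / 2) (g / (2 * (K + 1)))).
  assert (Hd : 0 < d) by (apply Rmin_pos; [lra| apply Rdiv_lt_0_compat; lra]).
  assert (Hd1 : d <= d0 / 2) by apply Rmin_l.
  assert (Hd2 : d <= g / (2 * (K + 1))) by apply Rmin_r.
  specialize (H d ltac:(lra)).
  assert (d * (2 * (K + 1)) <= g) by (apply Rmult_le_compat_r with (r := 2 * (K+1)) in Hd2; [|lra];
     unfold Rdiv in Hd2; rewrite Rmult_assoc, Rinv_l, Rmult_1_r in Hd2 by lra; exact Hd2).
  nra.
Qed.

Theorem goursat_exc F a b c d (q1 q2 : R) : a < q1 < b -> c < q2 < d -> Ccont F (q1, q2) ->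
  (forall x y, a <= x <= b -> c <= y <= d -> (x, y) <> (q1, q2) -> C_holomorphic_at F (x, y)) ->
  Gam F a b c d = 0%C.
Proof.
  intros Hq1 Hq2 Hc HD.
  assert (HR : Rc F a b c d).
  { intros x y Hx Hy. destruct (Req_dec x q1); destruct (Req_dec y q2); subst; auto;
    apply ex_derive_Ccont, HD; auto; intro E; inversion E; auto. }
  destruct (Hc 1 Rlt_0_1) as [d0 [Hd0 Hb]].
  set (B := Cmod (F (q1, q2)) + 1).
  assert (HB : 0 <= B) by (unfold B; generalize (Cmod_ge0 (F (q1, q2))); lra).
  apply Cmod_eq_0. apply (small_pos_zero _ (8 * B)). apply Cmod_ge0. lra.
  exists (Rmin (d0 / 2) (Rmin (Rmin (q1 - a) (b - q1)) (Rmin (q2 - c) (d - q2)))). split.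
  { repeat apply Rmin_pos; lra. }
  intros del [Hdel1 Hdel2].
  assert (D1 : del < d0 / 2) by (eapply Rlt_le_trans; [exact Hdel2| apply Rmin_l]).
  assert (D2 : del < Rmin (Rmin (q1 - a) (b - q1)) (Rmin (q2 - c) (d - q2))) by (eapply Rlt_le_trans; [exact Hdel2| apply Rmin_r]).
  assert (D3 : del < q1 - a /\ del < b - q1 /\ del < q2 - c /\ del < d - q2).
  { generalize (Rmin_l (Rmin (q1 - a) (b - q1)) (Rmin (q2 - c) (d - q2))) (Rmin_r (Rmin (q1 - a) (b - q1)) (Rmin (q2 - c) (d - q2)))
      (Rmin_l (q1 - a) (b - q1)) (Rmin_r (q1 - a) (b - q1)) (Rmin_l (q2 - c) (d - q2)) (Rmin_r (q2 - c) (d - q2)). lra. }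
  clear D2 Hdel2.
  destruct D3 as [E1 [E2 [E3 E4]]].
  rewrite (Gam_split_x F a (q1 - del) b c d) by (auto; lra).
  rewrite (Gam_split_x F (q1 - del) (q1 + del) b c d) by (try lra; apply (Rc_sub F a b c d); try lra; exact HR).
  rewrite (Gam_split_y F (q1 - del) (q1 + del) c (q2 - del) d) by (try lra; apply (Rc_sub F a b c d); try lra; exact HR).
  rewrite (Gam_split_y F (q1 - del) (q1 + del) (q2 - del) (q2 + del) d) by (try lra; apply (Rc_sub F a b c d); try lra; exact HR).
  rewrite (goursat F a (q1 - del) c d) by (try lra; intros x y Hx Hy; apply HD; try lra; intro E; inversion E; lra).
  rewrite (goursat F (q1 + del) b c d) by (try lra; intros x y Hx Hy; apply HD; try lra; intro E; inversion E; lra).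
  rewrite (goursat F (q1 - del) (q1 + del) c (q2 - del)) by (try lra; intros x y Hx Hy; apply HD; try lra; intro E; inversion E; lra).
  rewrite (goursat F (q1 - del) (q1 + del) (q2 + del) d) by (try lra; intros x y Hx Hy; apply HD; try lra; intro E; inversion E; lra).
  match goal with |- Cmod ?e <= _ => replace e with (Gam F (q1 - del) (q1 + del) (q2 - del) (q2 + del)) by ring end.
  eapply Rle_trans. apply (Gam_bound F _ _ _ _ B); try lra.
  apply (Rc_sub F a b c d); try lra; exact HR.
  - intros x y Hx Hy.
    assert (Dist : Cmod ((x, y) - (q1, q2)) < d0).
    { eapply Rle_lt_trans. apply Cmod_le_sum. simpl.
      replace (x + - q1) with (x - q1) by ring. replace (y + - q2) with (y - q2) by ring.
      unfold Rabs; repeat destruct Rcase_abs; lra. }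
    specialize (Hb _ Dist).
    assert (Cmod (F (x, y)) <= Cmod (F (x, y) - F (q1, q2)) + Cmod (F (q1, q2))).
    { replace (F (x, y)) with ((F (x, y) - F (q1, q2)) + F (q1, q2))%C at 1 by ring. apply Cmod_triangle. }
    unfold B. lra.
  - replace (2 * (q1 + del - (q1 - del) + (q2 + del - (q2 - del))) * B) with (del * (8 * B)) by ring. lra.
Qed.

Lemma unit_polar (x y : R) : x * x + y * y = 1 -> exists t, -PI <= t <= PI /\ x = cos t /\ y = sin t.
Proof.
  intros H.
  assert (Hx : -1 <= x <= 1) by nra.
  assert (Es : sqrt (1 - x²) = Rabs y).
  { rewrite <- sqrt_Rsqr_abs. f_equal. unfold Rsqr. lra. }
  assert (HB := acos_bound x). assert (PI_pos := PI_RGT_0).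
  destruct (Rle_dec 0 y).
  - exists (acos x). split. lra. split. rewrite cos_acos; auto.
    rewrite sin_acos by auto. rewrite Es, Rabs_pos_eq; auto.
  - exists (- acos x). split. lra. split. rewrite cos_neg, cos_acos; auto.
    rewrite sin_neg, sin_acos by auto. rewrite Es, Rabs_left; lra.
Qed.

Lemma cos_eq_1_0 (t : R) : -PI <= t <= PI -> cos t = 1 -> t = 0.
Proof.
  intros Ht Hc. destruct (Rle_dec 0 t).
  - rewrite <- (acos_cos t) by lra. rewrite Hc. apply acos_1.
  - assert (- t = 0). { rewrite <- (acos_cos (- t)) by lra. rewrite cos_neg, Hc. apply acos_1. } lra.
Qed.

Lemma angle_unique (y a : R) : a - PI <= y <= a + PI -> cos y = cos a -> sin y = sin a -> y = a.
Proof.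
  intros Hy Hc Hs.
  assert (cos (y - a) = 1).
  { rewrite cos_minus, Hc, Hs. rewrite Rplus_comm. replace (sin a * sin a + cos a * cos a) with ((sin a)² + (cos a)²) by (unfold Rsqr; ring). apply sin2_cos2. }
  apply cos_eq_1_0 in H; lra.
Qed.

Lemma Cmod_sq (z : C) : Cmod z * Cmod z = fst z * fst z + snd z * snd z.
Proof. unfold Cmod. rewrite sqrt_sqrt. simpl; ring. destruct z; simpl; nra. Qed.

Lemma polar_window (u : C) (t0 : R) : Cmod u = 1 -> -2 * PI <= t0 <= 0 ->
  exists t, t0 <= t <= t0 + 2 * PI /\ u = (cos t, sin t).
Proof.
  intros Hu Ht0. assert (H := Cmod_sq u). rewrite Hu in H.
  destruct (unit_polar (fst u) (snd u) ltac:(lra)) as [t [Ht [E1 E2]]].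
  assert (PI_pos := PI_RGT_0).
  destruct (Rle_dec t0 t).
  - destruct (Rle_dec t (t0 + 2 * PI)).
    + exists t. split. lra. destruct u; simpl in *; subst; auto.
    + exists (t - 2 * PI). split. lra.
      destruct u; simpl in *; subst. unfold Rminus. rewrite cos_plus, sin_plus, cos_neg, sin_neg, cos_2PI, sin_2PI.
      f_equal; ring.
  - exists (t + 2 * PI). split. lra.
    destruct u; simpl in *; subst. rewrite cos_plus, sin_plus, cos_2PI, sin_2PI. f_equal; ring.
Qed.

Lemma polar (p : C) : p <> 0%C -> exists a, -PI <= a <= PI /\ cexp (ln (Cmod p), a) = p.
Proof.
  intros Hp. assert (Hm : 0 < Cmod p) by (apply Cmod_gt_0; auto).
  assert (H := Cmod_sq p).
  destruct (unit_polar (fst p / Cmod p) (snd p / Cmod p)) as [a [Ha [E1 E2]]].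
  { unfold Rdiv. replace (fst p * / Cmod p * (fst p * / Cmod p) + snd p * / Cmod p * (snd p * / Cmod p))
      with ((fst p * fst p + snd p * snd p) / (Cmod p * Cmod p)) by (field; lra). rewrite <- H. field. lra. }
  exists a. split; auto. unfold cexp; simpl. rewrite exp_ln by auto. rewrite <- E1, <- E2.
  destruct p; simpl. f_equal; field; lra.
Qed.

Lemma Ccont_comp f g z : Ccont f z -> Ccont g (f z) -> Ccont (fun w => g (f w)) z.
Proof.
  intros Hf Hg eps Heps. destruct (Hg eps Heps) as [d1 [Hd1 H1]].
  destruct (Hf d1 Hd1) as [d2 [Hd2 H2]]. exists d2. split; auto.
Qed.

Lemma cexp_unit (t : R) : cexp (0, t) = (cos t, sin t).
Proof. unfold cexp; simpl. rewrite exp_0. f_equal; ring. Qed.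

Lemma Ccont_cexp z : Ccont cexp z.
Proof. apply (is_derive_Ccont cexp z (cexp z)), CD_cexp. Qed.

Lemma holo_comp_cexp (G : C -> C) (z : C) : C_holomorphic_at G (cexp z) -> C_holomorphic_at (fun w => G (cexp w)) z.
Proof. intros [l Hl]. eexists. apply (CD_comp cexp G z _ l (CD_cexp z) Hl). Qed.

Lemma strip_mv G t0 sb : sb <= 0 -> Ccont G 0 ->
  (forall s1, s1 < sb -> CexInt (fun t => G (cexp (s1, t))) t0 (t0 + 2 * PI) /\
     CInt (fun t => G (cexp (0, t))) t0 (t0 + 2 * PI) = CInt (fun t => G (cexp (s1, t))) t0 (t0 + 2 * PI)) ->
  CInt (fun t => G (cexp (0, t))) t0 (t0 + 2 * PI) = (RtoC (2 * PI) * G 0)%C.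
Proof.
  intros Hsb Hc H.
  assert (PI_pos := PI_RGT_0).
  set (V0 := CInt (fun t => G (cexp (0, t))) t0 (t0 + 2 * PI)).
  assert (Z : Cmod (V0 - RtoC (2 * PI) * G 0) = 0).
  { apply (small_pos_zero _ (2 * PI)). apply Cmod_ge0. lra.
    exists 1. split. lra. intros eps [He1 He2].
    destruct (Hc eps He1) as [del [Hdel Hd]].
    set (s1 := Rmin (sb - 1) (ln (del / 2))).
    assert (Hs1 : s1 < sb) by (unfold s1; generalize (Rmin_l (sb - 1) (ln (del / 2))); lra).
    assert (Hs2 : exp s1 < del).
    { assert (exp s1 <= exp (ln (del / 2))).
      { destruct (Rle_lt_or_eq_dec s1 (ln (del/2)) (Rmin_r _ _)) as [Hl|He]. apply Rlt_le, exp_increasing, Hl. rewrite He; lra. }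
      rewrite exp_ln in H0 by lra. lra. }
    destruct (H s1 Hs1) as [Hex HV]. unfold V0; rewrite HV.
    assert (I := CisInt_minus _ _ _ _ _ _ (CInt_correct _ _ _ Hex) (CisInt_const (G 0) t0 (t0 + 2 * PI))).
    match type of I with CisInt _ _ _ ?l => replace l with (CInt (fun t => G (cexp (s1, t))) t0 (t0 + 2 * PI) - RtoC (2 * PI) * G 0)%C in I by (apply injective_projections; simpl; ring) end.
    replace (eps * (2 * PI)) with ((t0 + 2 * PI - t0) * eps) by ring.
    apply (CisInt_norm (fun t => G (cexp (s1, t)) - G 0)%C t0 (t0 + 2 * PI) _ eps); [lra| |exact I].
    intros t Ht. apply Rlt_le, Hd. replace (cexp (s1, t) - 0)%C with (cexp (s1, t)) by ring. rewrite Cmod_cexp. simpl. exact Hs2. }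
  apply Cmod_eq_0 in Z. replace V0 with ((V0 - RtoC (2 * PI) * G 0) + RtoC (2 * PI) * G 0)%C by ring.
  rewrite Z. ring.
Qed.

Lemma gam_strip G s1 t0 : s1 <= 0 -> Rc (fun w => G (cexp w)) s1 0 t0 (t0 + 2 * PI) ->
  Gam (fun w => G (cexp w)) s1 0 t0 (t0 + 2 * PI) = 0%C ->
  CexInt (fun t => G (cexp (s1, t))) t0 (t0 + 2 * PI) /\
  CInt (fun t => G (cexp (0, t))) t0 (t0 + 2 * PI) = CInt (fun t => G (cexp (s1, t))) t0 (t0 + 2 * PI).
Proof.
  intros Hs HR HG. assert (PI_pos := PI_RGT_0). split.
  - apply (Rc_v (fun w => G (cexp w)) s1 0 t0 (t0 + 2 * PI)); auto; lra.
  - unfold Gam in HG.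
    rewrite (CInt_ext (fun x => G (cexp (x, t0 + 2 * PI))) (fun x => G (cexp (x, t0)))) in HG
      by (intros; rewrite cexp_period; auto).
    set (A := CInt (fun t => G (cexp (0, t))) t0 (t0 + 2 * PI)) in *.
    set (B := CInt (fun t => G (cexp (s1, t))) t0 (t0 + 2 * PI)) in *.
    set (X := CInt (fun x => G (cexp (x, t0))) s1 0) in *.
    replace A with (A - B + B)%C by ring.
    replace (A - B)%C with (- Ci * (X + Ci * A - X - Ci * B))%C.
    rewrite HG. ring.
    apply injective_projections; simpl; ring.
Qed.

Theorem mean_value (G : C -> C) (p : C) : Cmod p < 1 -> Ccont G p -> Ccont G 0 ->
  (forall u, Cmod u <= 1 -> u <> p -> C_holomorphic_at G u) ->
  exists t0, -2 * PI <= t0 <= 0 /\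
    CInt (fun t => G (cos t, sin t)) t0 (t0 + 2 * PI) = (RtoC (2 * PI) * G 0)%C.
Proof.
  intros Hp Hcp Hc0 HD. assert (PI_pos := PI_RGT_0).
  set (S := fun w => G (cexp w)).
  assert (HS : forall x y, x <= 0 -> cexp (x, y) <> p -> C_holomorphic_at S (x, y)).
  { intros x y Hx Hne. apply holo_comp_cexp. apply HD; auto. rewrite Cmod_cexp. simpl.
    destruct (Rle_lt_or_eq_dec x 0 Hx). apply Rlt_le. rewrite <- exp_0. apply exp_increasing; auto. subst; rewrite exp_0; lra. }
  assert (Fin : forall t0, CInt (fun t => G (cexp (0, t))) t0 (t0 + 2 * PI) = CInt (fun t => G (cos t, sin t)) t0 (t0 + 2 * PI)).
  { intros t0. apply CInt_ext. intros; rewrite cexp_unit; auto. }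
  destruct (Classical_Prop.classic (p = 0%C)) as [Hp0|Hp0].
  - exists 0. split. lra. rewrite <- Fin.
    apply (strip_mv G 0 0); auto. lra.
    intros s1 Hs1. apply gam_strip. lra.
    + apply Rc_of_holo. intros x y Hx Hy. apply HS. lra. rewrite Hp0. apply cexp_ne0.
    + apply goursat; try lra. intros x y Hx Hy. apply HS. lra. rewrite Hp0. apply cexp_ne0.
  - destruct (polar p Hp0) as [al [Hal Epol]].
    set (m := Cmod p) in *.
    assert (Hm : 0 < m) by (apply Cmod_gt_0; auto).
    assert (Hlm : ln m < 0) by (rewrite <- ln_1; apply ln_increasing; lra).
    exists (al - PI). split. lra. rewrite <- Fin.
    apply (strip_mv G (al - PI) (ln m)); auto. lra.
    intros s1 Hs1.
    assert (Uniq : forall x y, al - PI <= y <= al - PI + 2 * PI -> cexp (x, y) = p -> (x, y) = (ln m, al)).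
    { intros x y Hy E. rewrite <- Epol in E. unfold cexp in E. simpl in E.
      injection E. intros E2 E1.
      assert (Hx : exp x = exp (ln m)).
      { assert (H1 := Cmod_cexp (x, y)). assert (H2 := Cmod_cexp (ln m, al)).
        unfold cexp in H1, H2. simpl in H1, H2. rewrite E1, E2 in H1. rewrite H1 in H2. exact H2. }
      apply exp_inv in Hx. subst x.
      assert (Ep := exp_pos (ln m)).
      apply Rmult_eq_reg_l in E1; [|lra]. apply Rmult_eq_reg_l in E2; [|lra].
      f_equal. apply angle_unique; auto. lra. }
    assert (Hcq : Ccont S (ln m, al)).
    { unfold S. apply (Ccont_comp cexp G (ln m, al)). apply Ccont_cexp. rewrite Epol. auto. }
    assert (HR : Rc S s1 0 (al - PI) (al - PI + 2 * PI)).
    { intros x y Hx Hy. destruct (Classical_Prop.classic (cexp (x, y) = p)) as [E|E].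
      - rewrite (Uniq x y Hy E). auto.
      - apply ex_derive_Ccont, HS; auto. lra. }
    apply gam_strip; auto. lra.
    apply (goursat_exc S s1 0 (al - PI) (al - PI + 2 * PI) (ln m) al); auto; try lra.
    intros x y Hx Hy Hne. apply HS. lra. intro E. apply Hne, Uniq; auto.
Qed.

Definition mob (a u : C) : C := ((u + a) / (1 + Cconj a * u))%C.

Lemma Cmod_sq' (z : C) : Cmod z ^ 2 = fst z * fst z + snd z * snd z.
Proof. rewrite <- Cmod_sq. ring. Qed.

Lemma mob_ident (a u : C) :
  Cmod (1 + Cconj a * u) ^ 2 - Cmod (u + a) ^ 2 = (1 - Cmod a ^ 2) * (1 - Cmod u ^ 2).
Proof. rewrite !Cmod_sq'. destruct a as [a1 a2], u as [u1 u2]. simpl. ring. Qed.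

Lemma mob_den_ne0 (a u : C) : Cmod a < 1 -> Cmod u <= 1 -> (1 + Cconj a * u)%C <> 0%C.
Proof.
  intros Ha Hu E.
  assert (H : Cmod (Cconj a * u) < 1).
  { rewrite Cmod_mult, Cmod_conj. assert (0 <= Cmod a) by apply Cmod_ge0. assert (0 <= Cmod u) by apply Cmod_ge0. nra. }
  assert (E' : (Cconj a * u)%C = Copp (RtoC 1)).
  { replace (Cconj a * u)%C with ((1 + Cconj a * u) - 1)%C by ring. rewrite E. ring. }
  rewrite E', Cmod_opp, Cmod_1 in H. lra.
Qed.

Lemma Cmod_lt_of_sq (x y : C) : Cmod x ^ 2 < Cmod y ^ 2 -> Cmod x < Cmod y.
Proof. intros H. assert (0 <= Cmod x) by apply Cmod_ge0. assert (0 <= Cmod y) by apply Cmod_ge0. nra. Qed.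
Lemma Cmod_le_of_sq (x y : C) : Cmod x ^ 2 <= Cmod y ^ 2 -> Cmod x <= Cmod y.
Proof. intros H. assert (0 <= Cmod x) by apply Cmod_ge0. assert (0 <= Cmod y) by apply Cmod_ge0. nra. Qed.

Lemma mob_le1 (a u : C) : Cmod a < 1 -> Cmod u <= 1 -> Cmod (mob a u) <= 1.
Proof.
  intros Ha Hu. assert (Hd := mob_den_ne0 a u Ha Hu). unfold mob. rewrite Cmod_div by auto.
  assert (Hp : 0 < Cmod (1 + Cconj a * u)) by (apply Cmod_gt_0; auto).
  apply Rle_div_l; auto. rewrite Rmult_1_l. apply Cmod_le_of_sq.
  assert (H := mob_ident a u). assert (0 <= Cmod a) by apply Cmod_ge0. assert (0 <= Cmod u) by apply Cmod_ge0.
  assert (0 <= (1 - Cmod a ^ 2) * (1 - Cmod u ^ 2)) by (apply Rmult_le_pos; nra). lra.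
Qed.

Lemma mob_lt1 (a u : C) : Cmod a < 1 -> Cmod u < 1 -> Cmod (mob a u) < 1.
Proof.
  intros Ha Hu. assert (Hd := mob_den_ne0 a u Ha (Rlt_le _ _ Hu)). unfold mob. rewrite Cmod_div by auto.
  assert (Hp : 0 < Cmod (1 + Cconj a * u)) by (apply Cmod_gt_0; auto).
  apply Rlt_div_l; auto. rewrite Rmult_1_l. apply Cmod_lt_of_sq.
  assert (H := mob_ident a u). assert (0 <= Cmod a) by apply Cmod_ge0. assert (0 <= Cmod u) by apply Cmod_ge0.
  assert (0 < (1 - Cmod a ^ 2) * (1 - Cmod u ^ 2)) by (apply Rmult_lt_0_compat; nra). lra.
Qed.

Lemma mob_eq1 (a u : C) : Cmod a < 1 -> Cmod u = 1 -> Cmod (mob a u) = 1.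
Proof.
  intros Ha Hu. assert (Hd := mob_den_ne0 a u Ha (Req_le _ _ Hu)). unfold mob. rewrite Cmod_div by auto.
  assert (Hp : 0 < Cmod (1 + Cconj a * u)) by (apply Cmod_gt_0; auto).
  assert (H := mob_ident a u). rewrite Hu in H.
  assert (Cmod (u + a) = Cmod (1 + Cconj a * u)).
  { assert (0 <= Cmod (u + a)) by apply Cmod_ge0. nra. }
  rewrite H0. field. lra.
Qed.

Lemma aconj_ne1 (a : C) : Cmod a < 1 -> (1 - a * Cconj a)%C <> 0%C.
Proof.
  intros Ha E. assert (H := Cmod2_conj a). 
  assert (E2 : (a * Cconj a)%C = 1%C) by (replace (a * Cconj a)%C with (1 - (1 - a * Cconj a))%C by ring; rewrite E; ring).
  rewrite E2 in H. assert (Cmod a ^ 2 = 1). { apply (f_equal fst) in H. simpl in H. lra. }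
  assert (0 <= Cmod a) by apply Cmod_ge0. nra.
Qed.

Lemma Cconj_opp (a : C) : Cconj (- a) = (- Cconj a)%C.
Proof. destruct a; unfold Cconj; simpl. apply injective_projections; simpl; ring. Qed.

Lemma mob_inv (a u : C) : Cmod a < 1 -> Cmod u <= 1 -> mob (- a) (mob a u) = u.
Proof.
  intros Ha Hu. assert (Hd := mob_den_ne0 a u Ha Hu). assert (Hc := aconj_ne1 a Ha).
  unfold mob. rewrite Cconj_opp.
  assert (Hd2 : (1 + - Cconj a * ((u + a) / (1 + Cconj a * u)))%C <> 0%C).
  { replace (1 + - Cconj a * ((u + a) / (1 + Cconj a * u)))%C with ((1 - a * Cconj a) / (1 + Cconj a * u))%C by (field; auto).
    intro E. apply Hc. replace (1 - a * Cconj a)%C with ((1 - a * Cconj a) / (1 + Cconj a * u) * (1 + Cconj a * u))%C by (field; auto).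
    rewrite E. ring. }
  field. split; auto.
  replace (1 + Cconj a * u + - Cconj a * (u + a))%C with (1 - a * Cconj a)%C by ring. auto.
Qed.

Lemma mob_inv' (a v : C) : Cmod a < 1 -> Cmod v <= 1 -> mob a (mob (- a) v) = v.
Proof.
  intros Ha Hv. assert (Ha' : Cmod (- a) < 1) by (rewrite Cmod_opp; auto).
  assert (E : a = (- - a)%C) by ring. rewrite E at 1. apply mob_inv; auto.
Qed.

Lemma mob_0 (a : C) : mob a 0 = a.
Proof. unfold mob. field_simplify. auto. Qed.

Lemma CD_mob (a u : C) : (1 + Cconj a * u)%C <> 0%C ->
  CD (mob a) u ((1 * (1 + Cconj a * u) - (u + a) * (Cconj a * 1)) / ((1 + Cconj a * u) * (1 + Cconj a * u)))%C.
Proof.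
  intros Hd. unfold mob.
  apply (CD_div (fun u => u + a)%C (fun u => 1 + Cconj a * u)%C u 1 (Cconj a * 1)%C).
  - eapply CD_eq. apply CD_plus. apply CD_id. apply CD_const. ring.
  - eapply CD_eq. apply CD_plus. apply CD_const. apply CD_scal. apply CD_id. ring.
  - auto.
Qed.

Definition Rcont (g : R -> R) (x : R) : Prop :=
  forall eps, 0 < eps -> exists delta, 0 < delta /\ forall y, Rabs (y - x) < delta -> Rabs (g y - g x) < eps.

Lemma Rcont_continuous g x : Rcont g x -> continuous g x.
Proof.
  intros H P [e He]. destruct (H e (cond_pos e)) as [d [Hd H1]].
  exists (mkposreal d Hd). intros y Hy. apply He. apply H1. exact Hy.
Qed.

Lemma ex_RInt_Rcont g a b : a <= b -> (forall x, a <= x <= b -> Rcont g x) -> ex_RInt g a b.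
Proof.
  intros Hab H. apply (@ex_RInt_continuous R_CompleteNormedModule). intros z Hz.
  rewrite Rmin_left, Rmax_right in Hz by lra. apply Rcont_continuous, H, Hz.
Qed.

Lemma RInt_zero_nonneg g a b : a < b -> (forall x, a <= x <= b -> Rcont g x) ->
  (forall x, a <= x <= b -> 0 <= g x) -> RInt g a b = 0 -> forall x, a <= x <= b -> g x = 0.
Proof.
  intros Hab Hc Hp Hi x0 Hx0.
  destruct (Rle_lt_or_eq_dec 0 (g x0) (Hp x0 Hx0)) as [Hlt|]; auto. exfalso.
  destruct (Hc x0 Hx0 (g x0 / 2) ltac:(lra)) as [d [Hd H1]].
  set (l := Rmax a (x0 - d / 2)). set (r := Rmin b (x0 + d / 2)).
  assert (Hl1 : a <= l) by apply Rmax_l. assert (Hl2 : x0 - d/2 <= l) by apply Rmax_r.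
  assert (Hl3 : l <= x0) by (apply Rmax_lub; lra).
  assert (Hr1 : r <= b) by apply Rmin_l. assert (Hr2 : r <= x0 + d/2) by apply Rmin_r.
  assert (Hr3 : x0 <= r) by (apply Rmin_glb; lra).
  assert (Hlr : l < r).
  { destruct (Rlt_le_dec x0 b). 
    - assert (x0 < r) by (unfold r; apply Rmin_glb_lt; lra). lra.
    - assert (l < x0) by (unfold l; apply Rmax_lub_lt; lra). lra. }
  assert (Pos : forall y, l <= y <= r -> g x0 / 2 < g y).
  { intros y Hy. assert (Rabs (y - x0) < d) by (unfold Rabs; destruct Rcase_abs; lra).
    specialize (H1 y H). unfold Rabs in H1; destruct Rcase_abs in H1; lra. }
  assert (I1 : 0 <= RInt g a l) by (apply RInt_ge_0; auto; [apply ex_RInt_Rcont; auto; intros; apply Hc; lra | intros; apply Hp; lra]).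
  assert (I3 : 0 <= RInt g r b) by (apply RInt_ge_0; auto; [apply ex_RInt_Rcont; auto; intros; apply Hc; lra | intros; apply Hp; lra]).
  assert (I2 : 0 < RInt g l r).
  { apply RInt_gt_0; auto. intros; assert (g x0 / 2 < g x) by (apply Pos; lra); lra.
    intros; apply Rcont_continuous, Hc; lra. }
  assert (X1 : ex_RInt g a l) by (apply ex_RInt_Rcont; auto; intros; apply Hc; lra).
  assert (X2 : ex_RInt g l r) by (apply ex_RInt_Rcont; [lra|]; intros; apply Hc; lra).
  assert (X3 : ex_RInt g r b) by (apply ex_RInt_Rcont; auto; intros; apply Hc; lra).
  assert (X4 : ex_RInt g a r) by (apply ex_RInt_Rcont; [lra|]; intros; apply Hc; lra).
  assert (E1 := RInt_Chasles (V:=R_CompleteNormedModule) g a l r X1 X2).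
  assert (E2 := RInt_Chasles (V:=R_CompleteNormedModule) g a r b X4 X3).
  simpl in E1, E2. unfold plus in E1, E2; simpl in E1, E2.
  lra.
Qed.

Lemma fst_le_Cmod (z : C) : fst z <= Cmod z.
Proof. generalize (Cmod_fst_le z). unfold Rabs; destruct Rcase_abs; lra. Qed.

Lemma int_eq_case (phi : R -> C) (al L M : R) (c : C) : 0 < L ->
  (forall t, al <= t <= al + L -> RCcont phi t) ->
  (forall t, al <= t <= al + L -> Cmod (phi t) <= M) ->
  CInt phi al (al + L) = (RtoC L * c)%C -> Cmod c = M ->
  forall t, al <= t <= al + L -> phi t = c.
Proof.
  intros HL Hc HM HI Hcm.
  assert (HM0 : 0 <= M) by (rewrite <- Hcm; apply Cmod_ge0).
  set (psi := fun t => M * M - fst (Cconj c * phi t)%C).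
  assert (Cpsi : forall t, al <= t <= al + L -> Rcont psi t).
  { intros t Ht eps Heps. destruct (Hc t Ht (eps / (M + 1)) ltac:(apply Rdiv_lt_0_compat; lra)) as [d [Hd H1]].
    exists d. split; auto. intros y Hy. specialize (H1 y Hy). unfold psi.
    replace (M * M - fst (Cconj c * phi y)%C - (M * M - fst (Cconj c * phi t)%C)) with (- fst (Cconj c * (phi y - phi t))%C)
      by (simpl; ring).
    rewrite Rabs_Ropp. eapply Rle_lt_trans. apply Cmod_fst_le. rewrite Cmod_mult, Cmod_conj, Hcm.
    assert (0 <= Cmod (phi y - phi t)) by apply Cmod_ge0.
    apply Rmult_lt_compat_r with (r := M + 1) in H1; [|lra].
    unfold Rdiv in H1. rewrite Rmult_assoc, Rinv_l, Rmult_1_r in H1 by lra. nra. }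
  assert (Ppsi : forall t, al <= t <= al + L -> 0 <= psi t).
  { intros t Ht. unfold psi. assert (H := fst_le_Cmod (Cconj c * phi t)%C).
    rewrite Cmod_mult, Cmod_conj, Hcm in H. specialize (HM t Ht).
    assert (M * Cmod (phi t) <= M * M) by (apply Rmult_le_compat_l; auto). lra. }
  assert (Ex : CexInt phi al (al + L)).
  { apply CexInt_cont. intros x Hx. rewrite Rmin_left, Rmax_right in Hx by lra. apply Hc; auto. }
  assert (Ipsi : RInt psi al (al + L) = 0).
  { apply is_RInt_unique.
    assert (I1 := CisInt_fst _ _ _ _ (CisInt_lin phi al (al + L) _ (Cconj c) 0%C (CInt_correct _ _ _ Ex))).
    rewrite HI in I1.
    assert (I2 := is_RInt_const (V:=R_NormedModule) al (al + L) (M * M)).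
    assert (I3 := is_RInt_minus (V:=R_NormedModule) _ _ _ _ _ _ I2 I1).
    match type of I3 with is_RInt _ _ _ ?v => replace v with 0 in I3 end.
    eapply is_RInt_ext; [|exact I3].
    - intros x _. unfold psi. simpl. unfold minus, plus, opp; simpl. ring.
    - unfold minus, plus, opp, scal; simpl. unfold mult; simpl.
      rewrite <- Hcm. rewrite Cmod_sq. destruct c as [c1 c2]; simpl. ring. }
  intros t Ht.
  assert (Z := RInt_zero_nonneg psi al (al + L) ltac:(lra) Cpsi Ppsi Ipsi t Ht).
  unfold psi in Z.
  destruct (Rle_lt_or_eq_dec 0 M HM0) as [HMp|HM0'].
  2:{ assert (Cmod (phi t) = 0) by (generalize (HM t Ht) (Cmod_ge0 (phi t)); lra). assert (Cmod c = 0) by lra.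
      apply Cmod_eq_0 in H. apply Cmod_eq_0 in H0. rewrite H, H0. auto. }
  set (w := (Cconj c * phi t)%C) in *.
  assert (Hw : Cmod w <= M * M).
  { unfold w. rewrite Cmod_mult, Cmod_conj, Hcm. apply Rmult_le_compat_l; auto. }
  assert (Hw2 := Cmod_sq w).
  assert (Hw3 : snd w = 0).
  { assert (0 <= Cmod w) by apply Cmod_ge0.
    assert (Cmod w * Cmod w <= (M * M) * (M * M)) by (apply Rmult_le_compat; auto).
    assert (fst w = M * M) by lra. rewrite H1 in Hw2. nra. }
  assert (Ew : w = (Cconj c * c)%C).
  { apply injective_projections.
    - assert (fst w = M * M) by lra. rewrite H. rewrite <- Hcm, Cmod_sq. destruct c; simpl; ring.
    - rewrite Hw3. destruct c; simpl; ring. }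
  assert (Hc0 : Cconj c <> 0%C).
  { intro E. assert (Cmod (Cconj c) = 0) by (rewrite E; apply Cmod_0). rewrite Cmod_conj in H. lra. }
  unfold w in Ew. 
  replace (phi t) with (/ Cconj c * (Cconj c * phi t))%C by (field; auto). rewrite Ew. field. auto.
Qed.

Lemma Cmod_scal_inv (t : R) (z : C) : 0 < t -> Cmod (RtoC (/ t) * z) = Cmod z / t.
Proof. intros Ht. rewrite Cmod_mult, Cmod_R, Rabs_pos_eq. unfold Rdiv; ring. apply Rlt_le, Rinv_0_lt_compat; auto. Qed.

Lemma Cmod_scal (t : R) (z : C) : 0 < t -> Cmod (RtoC t * z) = t * Cmod z.
Proof. intros Ht. rewrite Cmod_mult, Cmod_R, Rabs_pos_eq; lra. Qed.

Lemma RCcont_unit (G : C -> C) (t : R) : Ccont G (cos t, sin t) -> RCcont (fun s => G (cos s, sin s)) t.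
Proof.
  intros H. assert (H2 : Ccont (fun w => G (cexp w)) (0, t)).
  { apply (Ccont_comp cexp G). apply Ccont_cexp. rewrite cexp_unit. auto. }
  apply Ccont_v in H2. intros eps Heps. destruct (H2 eps Heps) as [d [Hd H3]]. exists d; split; auto.
  intros y Hy. specialize (H3 y Hy). simpl in H3. rewrite !cexp_unit in H3. auto.
Qed.

Theorem max_mod (F : C -> C) (t : R) (e : C) (M : R) :
  0 < t -> Cmod e < t -> Ccont F e ->
  (forall w, Cmod w <= t -> w <> e -> C_holomorphic_at F w) ->
  (forall w, Cmod w = t -> Cmod (F w) <= M) ->
  forall z, Cmod z < t -> Cmod (F z) <= M /\ (Cmod (F z) = M -> forall w, Cmod w = t -> F w = F z).
Proof.
  intros Ht He Hce HD HM z Hz. assert (PI_pos := PI_RGT_0).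
  set (a := (RtoC (/ t) * z)%C).
  assert (Ha : Cmod a < 1) by (unfold a; rewrite Cmod_scal_inv by auto; apply Rlt_div_l; lra).
  assert (Ha' : Cmod (- a) < 1) by (rewrite Cmod_opp; auto).
  set (Psi := fun u => (RtoC t * mob a u)%C).
  set (et := (RtoC (/ t) * e)%C).
  assert (Het : Cmod et < 1) by (unfold et; rewrite Cmod_scal_inv by auto; apply Rlt_div_l; lra).
  set (p := mob (- a) et).
  assert (Hp : Cmod p < 1) by (apply mob_lt1; auto).
  assert (Ht0 : RtoC t <> 0%C) by (intro E; apply (f_equal fst) in E; simpl in E; lra).
  assert (Psip : Psi p = e).
  { unfold Psi, p. rewrite mob_inv' by (auto; lra). unfold et. rewrite RtoC_inv by lra. field. auto. }
  assert (Psi0 : Psi 0 = z) by (unfold Psi; rewrite mob_0; unfold a; rewrite RtoC_inv by lra; field; auto).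
  assert (Psi_mod : forall u, Cmod u <= 1 -> Cmod (Psi u) <= t).
  { intros u Hu. unfold Psi. rewrite Cmod_scal by auto. assert (H := mob_le1 a u Ha Hu). nra. }
  assert (Psi_mod1 : forall u, Cmod u = 1 -> Cmod (Psi u) = t).
  { intros u Hu. unfold Psi. rewrite Cmod_scal by auto. rewrite mob_eq1; auto. ring. }
  assert (Psi_inj : forall u, Cmod u <= 1 -> Psi u = e -> u = p).
  { intros u Hu E. unfold p. rewrite <- (mob_inv a u Ha Hu). f_equal. unfold et. rewrite <- E. unfold Psi. rewrite RtoC_inv by lra. field. auto. }
  assert (Psi_D : forall u, Cmod u <= 1 -> exists l, CD Psi u l).
  { intros u Hu. eexists. apply CD_scal. apply CD_mob. apply mob_den_ne0; auto. }
  assert (Psi_C : forall u, Cmod u <= 1 -> Ccont Psi u).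
  { intros u Hu. destruct (Psi_D u Hu) as [l Hl]. eapply is_derive_Ccont; exact Hl. }
  set (G := fun u => F (Psi u)).
  assert (HGp : Ccont G p).
  { unfold G. apply (Ccont_comp Psi F). apply Psi_C; lra. rewrite Psip. auto. }
  assert (HFz : Ccont F z).
  { destruct (Classical_Prop.classic (z = e)) as [E|E]. rewrite E; auto. apply ex_derive_Ccont, HD; auto; lra. }
  assert (HG0 : Ccont G 0).
  { unfold G. apply (Ccont_comp Psi F). apply Psi_C. rewrite Cmod_0; lra. rewrite Psi0. auto. }
  assert (HGD : forall u, Cmod u <= 1 -> u <> p -> C_holomorphic_at G u).
  { intros u Hu Hne. destruct (Psi_D u Hu) as [l Hl]. destruct (HD (Psi u)) as [l2 Hl2].
    apply Psi_mod; auto. intro E. apply Hne, Psi_inj; auto.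
    exists (l * l2)%C. apply (CD_comp Psi F u l l2 Hl Hl2). }
  destruct (mean_value G p Hp HGp HG0 HGD) as [t0 [Ht0w HMV]].
  assert (HG0z : G 0 = F z) by (unfold G; rewrite Psi0; auto).
  rewrite HG0z in HMV.
  assert (Cunit : forall s, Cmod (cos s, sin s) = 1).
  { intros s. unfold Cmod; simpl. replace (cos s * (cos s * 1) + sin s * (sin s * 1)) with ((sin s)² + (cos s)²) by (unfold Rsqr; ring).
    rewrite sin2_cos2. apply sqrt_1. }
  assert (Hcont : forall s, RCcont (fun s => G (cos s, sin s)) s).
  { intros s. apply RCcont_unit. destruct (HGD (cos s, sin s)) as [l Hl]. rewrite Cunit; lra.
    intro E. assert (Cmod p = 1) by (rewrite <- E; apply Cunit). lra. eapply is_derive_Ccont; exact Hl. }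
  assert (Hbd : forall s, Cmod (G (cos s, sin s)) <= M).
  { intros s. unfold G. apply HM. apply Psi_mod1, Cunit. }
  assert (Ex : CexInt (fun s => G (cos s, sin s)) t0 (t0 + 2 * PI)).
  { apply CexInt_cont. intros; apply Hcont. }
  split.
  - assert (B := CisInt_norm (fun s => G (cos s, sin s)) t0 (t0 + 2 * PI) _ M ltac:(lra) (fun s _ => Hbd s) (CInt_correct _ _ _ Ex)).
    rewrite HMV, Cmod_mult, Cmod_R, Rabs_pos_eq in B by lra.
    replace (t0 + 2 * PI - t0) with (2 * PI) in B by ring.
    apply Rmult_le_reg_l with (2 * PI); lra.
  - intros Heq w Hw.
    assert (EQ := int_eq_case (fun s => G (cos s, sin s)) t0 (2 * PI) M (F z) ltac:(lra)
      (fun s _ => Hcont s) (fun s _ => Hbd s) HMV Heq).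
    set (v := (RtoC (/ t) * w)%C).
    assert (Hv : Cmod v = 1) by (unfold v; rewrite Cmod_scal_inv, Hw by auto; field; lra).
    set (u := mob (- a) v).
    assert (Hu : Cmod u = 1) by (apply mob_eq1; auto).
    destruct (polar_window u t0 Hu Ht0w) as [s [Hs Es]].
    assert (Psiu : Psi u = w).
    { unfold Psi, u. rewrite mob_inv' by (auto; lra). unfold v. rewrite RtoC_inv by lra. field. auto. }
    rewrite <- Psiu. fold (G u). rewrite Es. apply EQ. lra.
Qed.

Definition kf (H : C -> C) (L : C) (w : C) : C := if Req_EM_T (Cmod w) 0 then L else (H w / w)%C.

Lemma kf_ne0 (H : C -> C) (L w : C) : w <> 0%C -> kf H L w = (H w / w)%C.
Proof. intros Hw. unfold kf. destruct (Req_EM_T (Cmod w) 0) as [E|E]; auto. apply Cmod_eq_0 in E. exfalso; apply Hw; exact E. Qed.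

Lemma kf_0 (H : C -> C) (L : C) : kf H L 0 = L.
Proof. unfold kf. rewrite Cmod_0. destruct (Req_EM_T 0 0) as [_|n]; auto. exfalso; apply n; reflexivity. Qed.

Lemma kf_cont0 (H : C -> C) (L : C) : H 0 = 0%C -> CD H 0 L -> Ccont (kf H L) 0.
Proof.
  intros H0 HL eps Heps.
  destruct (is_derive_C_eps H 0 L HL (eps / 2) ltac:(lra)) as [d [Hd Hb]].
  exists d. split; auto. intros w Hw. rewrite kf_0.
  destruct (Classical_Prop.classic (w = 0%C)) as [E|E].
  - subst. rewrite kf_0. assert (E0 : (L - L)%C = RtoC 0) by ring. rewrite E0, Cmod_0; lra.
  - rewrite kf_ne0 by auto. specialize (Hb w Hw). rewrite H0 in Hb.
    replace (w - 0)%C with w in Hb by ring.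
    assert (Hm : 0 < Cmod w) by (apply Cmod_gt_0; auto).
    replace (H w / w - L)%C with ((H w - 0 - L * w) / w)%C by (field; auto).
    rewrite Cmod_div by auto. apply Rlt_div_l; auto. nra.
Qed.

Lemma kf_holo (H : C -> C) (L w : C) : w <> 0%C -> C_holomorphic_at H w -> C_holomorphic_at (kf H L) w.
Proof.
  intros Hw [l Hl]. assert (Hm : 0 < Cmod w) by (apply Cmod_gt_0; auto).
  eexists. apply (CD_ext_loc (fun u => H u / u)%C (kf H L) w _ (Cmod w)); auto.
  - intros u Hu. rewrite kf_ne0; auto. intro E. subst. 
    replace (0 - w)%C with (- w)%C in Hu by ring. rewrite Cmod_opp in Hu. lra.
  - apply CD_div. exact Hl. apply CD_id. auto.
Qed.

Lemma Ccont_minus_const (f : C -> C) (z c : C) : Ccont f z -> Ccont (fun w => f w - c)%C z.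
Proof.
  intros H eps Heps. destruct (H eps Heps) as [d [Hd H1]]. exists d; split; auto.
  intros w Hw. replace (f w - c - (f z - c))%C with (f w - f z)%C by ring. auto.
Qed.

Lemma holo_minus_const (f : C -> C) (z c : C) : C_holomorphic_at f z -> C_holomorphic_at (fun w => f w - c)%C z.
Proof. intros [l Hl]. eexists. apply CD_minus. exact Hl. apply CD_const. Qed.

Theorem schwarz (H : C -> C) :
  (forall w, Cmod w < 1 -> C_holomorphic_at H w) ->
  (forall w, Cmod w < 1 -> Cmod (H w) <= 1) -> H 0 = 0%C ->
  (forall z, Cmod z < 1 -> Cmod (H z) <= Cmod z) /\
  (forall z1, 0 < Cmod z1 < 1 -> Cmod (H z1) = Cmod z1 ->
     exists beta, Cmod beta = 1 /\ forall w, Cmod w < 1 -> H w = (beta * w)%C).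
Proof.
  intros HD HB H0.
  destruct (HD 0 ltac:(rewrite Cmod_0; lra)) as [L HL].
  set (k := kf H L).
  assert (Kc0 : Ccont k 0) by (apply kf_cont0; auto).
  assert (KD : forall w, Cmod w < 1 -> w <> 0%C -> C_holomorphic_at k w).
  { intros w Hw Hne. apply kf_holo; auto. }
  assert (Kmod : forall w : C, w <> 0%C -> Cmod (k w) = Cmod (H w) / Cmod w).
  { intros w Hw. unfold k. rewrite kf_ne0 by auto. apply Cmod_div; auto. }
  assert (PA : forall z, Cmod z < 1 -> Cmod (H z) <= Cmod z).
  { intros z Hz. destruct (Classical_Prop.classic (z = 0%C)) as [E|E].
    { subst. rewrite H0, Cmod_0. lra. }
    assert (Hzp : 0 < Cmod z) by (apply Cmod_gt_0; auto).
    assert (Key : forall t, Cmod z < t < 1 -> Cmod (H z) * t <= Cmod z).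
    { intros t Ht.
      assert (Hm := max_mod k t 0 (/ t) ltac:(lra) ltac:(rewrite Cmod_0; lra) Kc0).
      destruct (Hm (fun w Hw Hne => KD w ltac:(lra) Hne)) with (z := z) as [Hk _]; auto.
      - intros w Hw. assert (w <> 0%C) by (intro E'; rewrite E', Cmod_0 in Hw; lra).
        rewrite Kmod, Hw by auto. unfold Rdiv. assert (0 < / t) by (apply Rinv_0_lt_compat; lra).
        assert (Cmod (H w) <= 1) by (apply HB; lra). nra.
      - lra.
      - rewrite Kmod in Hk by auto. unfold Rdiv in Hk.
        apply Rmult_le_compat_r with (r := Cmod z * t) in Hk; [|nra].
        replace (Cmod (H z) * / Cmod z * (Cmod z * t)) with (Cmod (H z) * t) in Hk by (field; lra).
        replace (/ t * (Cmod z * t)) with (Cmod z) in Hk by (field; lra). exact Hk. }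
    destruct (Rle_dec (Cmod (H z)) (Cmod z)) as [|Hn]; auto. exfalso. apply Rnot_le_lt in Hn.
    assert (Hh1 : Cmod (H z) <= 1) by auto.
    set (q := Cmod z / Cmod (H z)).
    assert (Hq1 : q < 1) by (unfold q; apply Rlt_div_l; lra).
    assert (Hq2 : Cmod z <= q) by (unfold q; apply Rle_div_r; nra).
    specialize (Key ((q + 1) / 2) ltac:(lra)).
    assert (Cmod (H z) * q = Cmod z) by (unfold q; field; lra).
    nra. }
  split; auto.
  intros z1 Hz1 Heq.
  assert (Hz10 : z1 <> 0%C) by (intro E; subst; rewrite Cmod_0 in Hz1; lra).
  exists (k z1). split.
  { rewrite Kmod by auto. rewrite Heq. field. lra. }
  assert (Kle : forall w, Cmod w < 1 -> w <> 0%C -> Cmod (k w) <= 1).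
  { intros w Hw Hne. rewrite Kmod by auto. assert (0 < Cmod w) by (apply Cmod_gt_0; auto).
    apply Rle_div_l; auto. rewrite Rmult_1_l. auto. }
  intros w Hw.
  set (t := (Rmax (Cmod w) (Cmod z1) + 1) / 2).
  assert (Ht1 : Cmod w < t) by (unfold t; generalize (Rmax_l (Cmod w) (Cmod z1)) (Rmax_r (Cmod w) (Cmod z1)) (Rmax_lub_lt (Cmod w) (Cmod z1) 1 Hw (proj2 Hz1)); lra).
  assert (Ht2 : Cmod z1 < t) by (unfold t; generalize (Rmax_l (Cmod w) (Cmod z1)) (Rmax_r (Cmod w) (Cmod z1)) (Rmax_lub_lt (Cmod w) (Cmod z1) 1 Hw (proj2 Hz1)); lra).
  assert (Ht3 : t < 1) by (unfold t; generalize (Rmax_lub_lt (Cmod w) (Cmod z1) 1 Hw (proj2 Hz1)); lra).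
  assert (Ht0 : 0 < t) by lra.
  assert (Circ : forall w', Cmod w' = t -> k w' = k z1).
  { intros w' Hw'.
    assert (Hm := max_mod k t 0 1 Ht0 ltac:(rewrite Cmod_0; lra) Kc0 (fun w Hw Hne => KD w ltac:(lra) Hne)).
    destruct (Hm) with (z := z1) as [_ Heq']; auto.
    - intros u Hu. apply Kle. lra. intro E; subst; rewrite Cmod_0 in Hu; lra.
    - apply Heq'; auto. rewrite Kmod by auto. rewrite Heq. field. lra. }
  assert (Inside : k w = k z1).
  { assert (Hm := max_mod (fun u => k u - k z1)%C t 0 0 Ht0 ltac:(rewrite Cmod_0; lra) (Ccont_minus_const k 0 (k z1) Kc0)).
    destruct (Hm) with (z := w) as [Hle _]; auto.
    - intros u Hu Hne. apply holo_minus_const, KD; auto. lra.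
    - intros u Hu. rewrite Circ by auto. replace (k z1 - k z1)%C with (RtoC 0) by ring. rewrite Cmod_0. lra.
    - assert (Cmod (k w - k z1) = 0) by (generalize (Cmod_ge0 (k w - k z1)); lra).
      apply Cmod_eq_0 in H1. replace (k w) with ((k w - k z1) + k z1)%C by ring. rewrite H1. ring. }
  destruct (Classical_Prop.classic (w = 0%C)) as [E|E].
  - subst. rewrite H0. ring.
  - rewrite <- Inside. unfold k. rewrite kf_ne0 by auto. field. auto.
Qed.

Lemma conj_mul_self (a : C) : (Cconj a * a)%C = RtoC (Cmod a * Cmod a).
Proof. rewrite Cmod_sq. destruct a as [a1 a2]. apply injective_projections; simpl; ring. Qed.

Lemma mob_special (a : C) (k : R) : 0 <= k -> a <> 0%C ->
  Cmod (mob (- a) (RtoC (- k) * a)) = (k + 1) * Cmod a / (1 + k * (Cmod a * Cmod a)).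
Proof.
  intros Hk Ha. assert (Hs : 0 < Cmod a) by (apply Cmod_gt_0; auto).
  unfold mob. rewrite Cconj_opp.
  replace (RtoC (- k) * a + - a)%C with (RtoC (- (k + 1)) * a)%C by (apply injective_projections; simpl; ring).
  replace (1 + - Cconj a * (RtoC (- k) * a))%C with (RtoC (1 + k * (Cmod a * Cmod a))).
  2:{ replace (1 + - Cconj a * (RtoC (- k) * a))%C with (1 + RtoC k * (Cconj a * a))%C by (rewrite RtoC_opp; ring).
      rewrite conj_mul_self. apply injective_projections; simpl; ring. }
  rewrite Cmod_div. rewrite Cmod_mult, !Cmod_R. rewrite (Rabs_left (- (k+1))) by lra.
  rewrite (Rabs_pos_eq (1 + _)) by nra. f_equal. ring.
  intro E. apply (f_equal fst) in E. simpl in E. nra.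
Qed.

Theorem lemma1p5 (eps : R) (f : C -> C) :
  0 < eps ->
  holomorphic_on_disc (1 + eps) f ->
  (forall w : C, Cmod w <= 1 <-> exists z : C, Cmod z <= 1 /\ f z = w) ->
  (forall z : C, Cmod z < 1 + eps -> Cmod (f z) < 1 + eps) ->
  exists beta : C, Cmod beta = 1 /\
    forall z : C, Cmod z < 1 + eps -> f z = (beta * z)%C.
Proof.
  intros Heps Hhol Hsurj Hbd.
  set (r := 1 + eps) in *.
  assert (Hr : 1 < r) by (unfold r; lra).
  set (rho := / r).
  assert (Hrho : 0 < rho < 1) by (unfold rho; split; [apply Rinv_0_lt_compat; lra| rewrite <- Rinv_1; apply Rinv_lt_contravar; lra]).
  assert (Hrr : rho * r = 1) by (unfold rho; field; lra).
  set (g := fun w => (RtoC rho * f (RtoC r * w))%C).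
  assert (Hg_hol : forall w, Cmod w < 1 -> C_holomorphic_at g w).
  { intros w Hw. destruct (Hhol (RtoC r * w)%C) as [l Hl].
    rewrite Cmod_scal by lra. nra.
    eexists. apply CD_scal. apply (CD_comp (fun w => RtoC r * w)%C f w (RtoC r * 1)%C l).
    apply CD_scal, CD_id. exact Hl. }
  assert (Hg_bd : forall w, Cmod w < 1 -> Cmod (g w) <= 1).
  { intros w Hw. unfold g. rewrite Cmod_scal by lra.
    assert (H := Hbd (RtoC r * w)%C ltac:(rewrite Cmod_scal by lra; nra)).
    assert (rho * Cmod (f (RtoC r * w)%C) <= rho * r) by (apply Rmult_le_compat_l; lra). lra. }
  assert (Hg_le : forall w, Cmod w <= rho -> Cmod (g w) <= rho).
  { intros w Hw. unfold g. rewrite Cmod_scal by lra.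
    assert (H : Cmod (f (RtoC r * w)%C) <= 1).
    { apply Hsurj. exists (RtoC r * w)%C. split; auto. rewrite Cmod_scal by lra.
      assert (r * Cmod w <= r * rho) by (apply Rmult_le_compat_l; lra). lra. }
    assert (rho * Cmod (f (RtoC r * w)%C) <= rho * 1) by (apply Rmult_le_compat_l; lra). lra. }
  assert (Hg_onto : forall v, Cmod v <= rho -> exists w, Cmod w <= rho /\ g w = v).
  { intros v Hv. destruct (proj1 (Hsurj (RtoC r * v)%C)) as [z [Hz Ez]].
    { rewrite Cmod_scal by lra. assert (r * Cmod v <= r * rho) by (apply Rmult_le_compat_l; lra). lra. }
    exists (RtoC rho * z)%C. split.
    - rewrite Cmod_scal by lra. assert (rho * Cmod z <= rho * 1) by (apply Rmult_le_compat_l; lra). lra.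
    - unfold g. replace (RtoC r * (RtoC rho * z))%C with z.
      2:{ replace (RtoC r * (RtoC rho * z))%C with (RtoC (rho * r) * z)%C by (apply injective_projections; simpl; ring).
          rewrite Hrr. ring. }
      rewrite Ez. replace (RtoC rho * (RtoC r * v))%C with (RtoC (rho * r) * v)%C by (apply injective_projections; simpl; ring).
      rewrite Hrr. ring. }
  assert (HA : g 0 = 0%C).
  { set (a := g 0).
    assert (Ha : Cmod a <= rho) by (apply Hg_le; rewrite Cmod_0; lra).
    destruct (Classical_Prop.classic (a = 0%C)) as [E|Ea]; auto. exfalso.
    assert (Hs : 0 < Cmod a) by (apply Cmod_gt_0; auto).
    assert (Ha1 : Cmod (- a) < 1) by (rewrite Cmod_opp; lra).
    set (h := fun w => mob (- a) (g w)).
    assert (Hh_hol : forall w, Cmod w < 1 -> C_holomorphic_at h w).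
    { intros w Hw. destruct (Hg_hol w Hw) as [l Hl]. eexists.
      apply (CD_comp g (mob (- a)) w l). exact Hl. apply CD_mob. apply mob_den_ne0; auto. }
    assert (Hh_bd : forall w, Cmod w < 1 -> Cmod (h w) <= 1).
    { intros w Hw. apply mob_le1; auto. }
    assert (Hh0 : h 0 = 0%C).
    { unfold h. fold a. unfold mob. replace (a + - a)%C with (RtoC 0) by ring. unfold Cdiv. ring. }
    destruct (schwarz h Hh_hol Hh_bd Hh0) as [PA _].
    set (k := rho / Cmod a).
    assert (Hk : 0 <= k) by (unfold k; apply Rlt_le, Rdiv_lt_0_compat; lra).
    set (vs := (RtoC (- k) * a)%C).
    assert (Hvs : Cmod vs = rho).
    { unfold vs. rewrite Cmod_mult, Cmod_R, Rabs_left1 by lra. unfold k. field. lra. }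
    destruct (Hg_onto vs ltac:(lra)) as [ws [Hws Ews]].
    assert (P := PA ws ltac:(lra)). unfold h in P. rewrite Ews in P. unfold vs in P.
    rewrite mob_special in P by auto.
    unfold k in P.
    replace ((rho / Cmod a + 1) * Cmod a / (1 + rho / Cmod a * (Cmod a * Cmod a))) with
      ((rho + Cmod a) / (1 + rho * Cmod a)) in P by (field; nra).
    apply Rle_div_l in P; [|nra].
    assert (rho * (1 + rho * Cmod a) <= rho * 1 + rho * rho * Cmod a) by nra.
    assert (Cmod ws * (1 + rho * Cmod a) <= rho * (1 + rho * Cmod a)) by (apply Rmult_le_compat_r; nra).
    assert (rho * rho < 1) by nra. assert (rho * rho * Cmod a < 1 * Cmod a) by (apply Rmult_lt_compat_r; lra).
    lra. }
  destruct (schwarz g Hg_hol Hg_bd HA) as [PA PB].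
  destruct (Hg_onto (RtoC rho) ltac:(rewrite Cmod_R, Rabs_pos_eq; lra)) as [ws [Hws Ews]].
  assert (P := PA ws ltac:(lra)). rewrite Ews, Cmod_R, Rabs_pos_eq in P by lra.
  destruct (PB ws ltac:(lra) ltac:(rewrite Ews, Cmod_R, Rabs_pos_eq; lra)) as [beta [Hb Hgb]].
  exists beta. split; auto.
  intros z Hz.
  assert (Hw : Cmod (RtoC rho * z)%C < 1).
  { rewrite Cmod_scal by lra. assert (rho * Cmod z < rho * r) by (apply Rmult_lt_compat_l; lra). lra. }
  specialize (Hgb _ Hw). unfold g in Hgb.
  replace (RtoC r * (RtoC rho * z))%C with z in Hgb.
  2:{ replace (RtoC r * (RtoC rho * z))%C with (RtoC (rho * r) * z)%C by (apply injective_projections; simpl; ring).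
      rewrite Hrr. ring. }
  replace (f z) with (RtoC r * (RtoC rho * f z))%C.
  2:{ replace (RtoC r * (RtoC rho * f z))%C with (RtoC (rho * r) * f z)%C by (apply injective_projections; simpl; ring).
      rewrite Hrr. ring. }
  rewrite Hgb.
  replace (RtoC r * (beta * (RtoC rho * z)))%C with (beta * (RtoC (rho * r) * z))%C by (apply injective_projections; simpl; ring).
  rewrite Hrr. ring.
Qed.
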